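(* Let $N\ge 2$ and $d\ge 1$ be integers, $[N]=\{1,\dots,N\}$, and let $0\le\sigma\le\tau$. Let $\psi:[0,\infty)\to[0,\infty)$ be continuous, nonincreasing, with $\psi(s)>0$ for all $s\ge0$ and $\sup_{s\ge0}\psi(s)\le1$. Let $x_i^0\in C^1([-\tau,0],\mathbb{R}^d)$, $v_i^0\in C([-\tau,0],\mathbb{R}^d)$ with $\frac{\mathrm d}{\mathrm dt}x_i^0=v_i^0$ on $[-\tau,0]$, $i\in[N]$, and let $\{x_i,v_i\}_{i\in[N]}$ be the global solution of \[ \dot x_i(t)=v_i(t),\qquad \dot v_i(t)=\sum_{j\ne i}a_{ij}(t)\big(v_j(t-\tau)-v_i(t-\sigma)\big),\quad t>0, \] with $a_{ij}(t)=\frac{1}{N-1}\psi(|x_i(t-\sigma)-x_j(t-\tau)|)$ and $x_i=x_i^0$, $v_i=v_i^0$ on $[-\tau,0]$. Let $K$ be the smallest integer with $K\sigma\ge2\tau$. Assume there exists $\beta>0$ with \[ 4\tau\le\beta\left(2e^{-2\tau}-1\right) \] and $C>0$ with \[ e^{C\tau}\big(4\tau e^{C\tau}+\beta(1-e^{-2\tau})\big)+C\le\psi\Big(\Delta^0_x+\mathcal{W}^K_\sigma\Delta^0_v+\frac{e^{C\tau}}{C}\big(1+\beta^{-1}e^{2\tau+C\sigma}+e^{C\tau}(\tau-\sigma)\big)\mathcal{Z}^K_\sigma\Delta^0_v\Big), \] where $\mathcal{Z}^K_\sigma:=Z^K_\sigma+Z^{K-1}_\sigma\beta\big(1-(1+2\tau)e^{-2\tau}\big)$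 and $\mathcal{W}^K_\sigma:=Z^K_\sigma-(1+\sigma)(Z^{K-1}_\sigma+1)$. Then the solution exhibits asymptotic flocking, i.e. $\sup_{t\ge0}d_x(t)<\infty$ and $\lim_{t\to\infty}d_v(t)=0$, and $d_v(t)$ decays exponentially in time with rate $C$.
   Context: $d_x(t):=\max_{i,j}|x_i(t)-x_j(t)|$, $d_v(t):=\max_{i,j}|v_i(t)-v_j(t)|$ for $t\ge0$. $\Delta^0_x:=\max_{i,j}\max_{s,t\in[-\tau,0]}|x_i^0(s)-x_j^0(t)|$, $\Delta^0_v:=\max_{i,j}\max_{s,t\in[-\tau,0]}|v_i^0(s)-v_j^0(t)|$. For $k\ge0$, \[ Z^k_\sigma:=\frac{1}{2\sqrt{\sigma(1+\sigma)}}\Big[\big((1+\sigma)+\sqrt{\sigma(1+\sigma)}\big)^{k+1}-\big((1+\sigma)-\sqrt{\sigma(1+\sigma)}\big)^{k+1}\Big], \] a polynomial in $\sigma$; equivalently $Z^0_\sigma=1$, $Z^k_\sigma=1+(1+\sigma)Z^{k-1}_\sigma+\sigma\sum_{m=0}^{k-1}Z^m_\sigma$ for $k\ge1$. ''Decays exponentially with rate $C$'' means there is a constant $A>0$ with $d_v(t)\le Ae^{-Ct}$ for all $t\ge0$. *)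

(* Defs.v *)
From Stdlib Require Import Reals Lra Lia List ZArith.
From Coquelicot Require Import Coquelicot.
Import ListNotations.
Open Scope R_scope.

(* Vectors of R^d are represented as functions nat -> R (components 0..d-1).
   Particles are indexed by 0..N-1. *)

Definition eucl (d : nat) (a : nat -> R) : R :=
  sqrt (fold_right Rplus 0 (map (fun k => (a k) ^ 2) (seq 0 d))).

Definition diam (N d : nat) (f : nat -> R -> nat -> R) (t : R) : R :=
  fold_right Rmax 0
    (map (fun p => eucl d (fun k => f (fst p) t k - f (snd p) t k))
         (list_prod (seq 0 N) (seq 0 N))).

Definition is_Delta0 (N d : nat) (tau : R) (f : nat -> R -> nat -> R) (D : R) : Prop :=
  (forall i j s t, (i < N)%nat -> (j < N)%nat -> -tau <= s <= 0 -> -tau <= t <= 0 ->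
      eucl d (fun k => f i s k - f j t k) <= D) /\
  (exists i j s t, (i < N)%nat /\ (j < N)%nat /\ -tau <= s <= 0 /\ -tau <= t <= 0 /\
      eucl d (fun k => f i s k - f j t k) = D).

(** Z^k_sigma by the closed formula, for integer k >= -1 (Z^{-1}_sigma = 0). *)
Definition Zsig (sigma : R) (k : Z) : R :=
  let r := sqrt (sigma * (1 + sigma)) in
  / (2 * r) * (((1 + sigma) + r) ^ (Z.to_nat (k + 1)) - ((1 + sigma) - r) ^ (Z.to_nat (k + 1))).

Definition cont_on (D : R -> Prop) (f : R -> R) : Prop :=
  forall t, D t -> filterlim f (within D (locally t)) (locally (f t)).

Definition deriv_on_interval (a b : R) (f f' : R -> R) : Prop :=
  forall t, a <= t <= b ->
    filterlim (fun h => (f (t + h) - f t) / h)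
      (within (fun h => h <> 0 /\ a <= t + h <= b) (locally 0)) (locally (f' t)).

Definition noninc_on_nonneg (psi : R -> R) : Prop :=
  forall s1 s2, 0 <= s1 -> s1 <= s2 -> psi s2 <= psi s1.

Definition vel_rhs (N d : nat) (sigma tau : R) (psi : R -> R)
  (x v : nat -> R -> nat -> R) (i : nat) (t : R) (k : nat) : R :=
  fold_right Rplus 0
    (map (fun j =>
       if Nat.eqb j i then 0 else
       / (INR N - 1) * psi (eucl d (fun l => x i (t - sigma) l - x j (t - tau) l))
         * (v j (t - tau) k - v i (t - sigma) k))
     (seq 0 N)).

(* Main.v *)
Require Import Defs.
From Stdlib Require Import Reals ZArith Lra Lia List Classical.
From Coquelicot Require Import Coquelicot.
Open Scope R_scope.

Definition sumL (l : list nat) (f : nat -> R) : R := fold_right Rplus 0 (map f l).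

Lemma sumL_nil f : sumL nil f = 0.
Proof. reflexivity. Qed.
Lemma sumL_cons k l f : sumL (k :: l) f = f k + sumL l f.
Proof. reflexivity. Qed.

Lemma sumL_ext l f g : (forall k, In k l -> f k = g k) -> sumL l f = sumL l g.
Proof.
  induction l as [|a l IH]; intros H; simpl; auto.
  unfold sumL in *; simpl. rewrite H by (left; auto). rewrite IH; auto.
  intros; apply H; right; auto.
Qed.

Lemma sumL_plus l f g : sumL l (fun k => f k + g k) = sumL l f + sumL l g.
Proof. induction l; unfold sumL in *; simpl; [lra|]. rewrite IHl; lra. Qed.

Lemma sumL_minus l f g : sumL l (fun k => f k - g k) = sumL l f - sumL l g.
Proof. induction l; unfold sumL in *; simpl; [lra|]. rewrite IHl; lra. Qed.

Lemma sumL_scal l c f : sumL l (fun k => c * f k) = c * sumL l f.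
Proof. induction l; unfold sumL in *; simpl; [lra|]. rewrite IHl; lra. Qed.

Lemma sumL_le l f g : (forall k, In k l -> f k <= g k) -> sumL l f <= sumL l g.
Proof.
  induction l as [|a l IH]; intros H; unfold sumL in *; simpl; [lra|].
  assert (f a <= g a) by (apply H; left; auto).
  assert (fold_right Rplus 0 (map f l) <= fold_right Rplus 0 (map g l)) by (apply IH; intros; apply H; right; auto).
  lra.
Qed.

Lemma sumL_const l c : sumL l (fun _ => c) = INR (length l) * c.
Proof.
  induction l; unfold sumL in *; simpl length; [simpl; lra|].
  rewrite S_INR. simpl. rewrite IHl. lra.
Qed.

Lemma sumL_nonneg l f : (forall k, In k l -> 0 <= f k) -> 0 <= sumL l f.
Proof.
  intros H. replace 0 with (sumL l (fun _ => 0)).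
  apply sumL_le; auto. rewrite sumL_const; lra.
Qed.

Lemma sumL_swap l1 l2 (f : nat -> nat -> R) :
  sumL l1 (fun k => sumL l2 (fun j => f j k)) = sumL l2 (fun j => sumL l1 (fun k => f j k)).
Proof.
  induction l1 as [|a l1 IH].
  - rewrite sumL_nil. symmetry. replace 0 with (INR (length l2) * 0) by lra.
    rewrite <- sumL_const. apply sumL_ext. intros; reflexivity.
  - rewrite sumL_cons, IH. rewrite <- sumL_plus. apply sumL_ext. intros. rewrite sumL_cons. reflexivity.
Qed.

Lemma sumL_seq_S n f : sumL (seq 0 (S n)) f = sumL (seq 0 n) f + f n.
Proof.
  rewrite seq_S. unfold sumL. rewrite map_app, fold_right_app. simpl.
  generalize (f n). induction (seq 0 n); intros r; simpl; [lra|]. rewrite IHl. lra.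
Qed.

Lemma count_ne N i : (i < N)%nat ->
  sumL (seq 0 N) (fun j => if Nat.eqb j i then 0 else 1) = INR N - 1.
Proof.
  induction N as [|N IH]; intros Hi; [lia|].
  rewrite sumL_seq_S. destruct (Nat.eq_dec i N) as [->|Hne].
  - rewrite Nat.eqb_refl.
    rewrite (sumL_ext _ _ (fun _ => 1)).
    + rewrite sumL_const, length_seq, S_INR. lra.
    + intros k Hk. apply in_seq in Hk. destruct (Nat.eqb_spec k N); [lia|auto].
  - rewrite IH by lia. destruct (Nat.eqb_spec N i); [lia|]. rewrite S_INR. lra.
Qed.

Definition dot (d : nat) (a b : nat -> R) : R := sumL (seq 0 d) (fun k => a k * b k).

Lemma eucl_dot d a : eucl d a = sqrt (dot d a a).
Proof.
  unfold eucl, dot, sumL. f_equal. f_equal. apply map_ext. intros; simpl; ring.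
Qed.

Lemma dot_ge0 d a : 0 <= dot d a a.
Proof. apply sumL_nonneg. intros. apply Rle_0_sqr. Qed.

Lemma eucl_ge0 d a : 0 <= eucl d a.
Proof. rewrite eucl_dot. apply sqrt_pos. Qed.

Lemma eucl_sq d a : eucl d a * eucl d a = dot d a a.
Proof. rewrite eucl_dot. apply sqrt_sqrt, dot_ge0. Qed.

Lemma dot_ext d a b a' b' : (forall k, (k < d)%nat -> a k = a' k) ->
  (forall k, (k < d)%nat -> b k = b' k) -> dot d a b = dot d a' b'.
Proof.
  intros Ha Hb. unfold dot. apply sumL_ext. intros k Hk. apply in_seq in Hk.
  rewrite Ha, Hb by lia. reflexivity.
Qed.

Lemma eucl_ext d a b : (forall k, (k < d)%nat -> a k = b k) -> eucl d a = eucl d b.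
Proof. intros H. rewrite !eucl_dot. f_equal. apply dot_ext; auto. Qed.

Lemma dot_comm d a b : dot d a b = dot d b a.
Proof. unfold dot. apply sumL_ext. intros; ring. Qed.

Lemma dot_linr d a b c (l m : R) : dot d a (fun k => l * b k + m * c k) = l * dot d a b + m * dot d a c.
Proof.
  unfold dot. rewrite <- !sumL_scal, <- sumL_plus. apply sumL_ext. intros; ring.
Qed.

Lemma dot_minusr d a b c : dot d a (fun k => b k - c k) = dot d a b - dot d a c.
Proof. unfold dot. rewrite <- sumL_minus. apply sumL_ext. intros; ring. Qed.

Lemma dot_scall d a b l : dot d (fun k => l * a k) b = l * dot d a b.
Proof. unfold dot. rewrite <- sumL_scal. apply sumL_ext. intros; ring. Qed.

Lemma CS d a b : dot d a b <= eucl d a * eucl d b.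
Proof.
  set (A := dot d a a). set (B := dot d b b). set (D := dot d a b).
  assert (HA : 0 <= A) by apply dot_ge0. assert (HB : 0 <= B) by apply dot_ge0.
  assert (Hq : forall l, 0 <= A - 2 * l * D + l * l * B).
  { intros l. assert (H := dot_ge0 d (fun k => a k - l * b k)).
    replace (dot d (fun k => a k - l * b k) (fun k => a k - l * b k)) with (A - 2 * l * D + l * l * B) in H; auto.
    unfold A, B, D, dot. rewrite <- !sumL_scal, <- sumL_minus, <- sumL_plus. apply sumL_ext. intros; ring. }
  rewrite !eucl_dot. fold A B D.
  destruct (Rle_dec D 0) as [HD|HD].
  - apply Rle_trans with 0; auto. apply Rmult_le_pos; apply sqrt_pos.
  - destruct (Req_dec B 0) as [HB0|HB0].
    + exfalso. specialize (Hq ((A + 1) / (2 * D))). rewrite HB0 in Hq.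
      replace (A - 2 * ((A + 1) / (2 * D)) * D + (A + 1) / (2 * D) * ((A + 1) / (2 * D)) * 0) with (-1) in Hq by (field; lra). lra.
    + specialize (Hq (D / B)).
      assert (HDB : D * D <= A * B).
      { replace (A - 2 * (D / B) * D + D / B * (D / B) * B) with (A - D * D / B) in Hq by (field; lra).
        assert (0 <= (A - D * D / B) * B) by (apply Rmult_le_pos; lra).
        replace ((A - D * D / B) * B) with (A * B - D * D) in H by (field; lra). lra. }
      rewrite <- sqrt_mult_alt by auto.
      rewrite <- (sqrt_square D) by lra. apply sqrt_le_1_alt; lra.
Qed.

Lemma eucl_tri d a b : eucl d (fun k => a k + b k) <= eucl d a + eucl d b.
Proof.
  assert (H1 := CS d a b). assert (Ha := eucl_ge0 d a). assert (Hb := eucl_ge0 d b).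
  assert (Hs : dot d (fun k => a k + b k) (fun k => a k + b k) = dot d a a + 2 * dot d a b + dot d b b).
  { unfold dot. rewrite <- !sumL_scal, <- !sumL_plus. apply sumL_ext. intros; ring. }
  rewrite (eucl_dot d (fun k => a k + b k)), Hs.
  rewrite <- (sqrt_square (eucl d a + eucl d b)) by lra.
  apply sqrt_le_1_alt. rewrite <- !eucl_sq. nra.
Qed.

Lemma eucl_tri3 d a b c : eucl d (fun k => a k - c k) <= eucl d (fun k => a k - b k) + eucl d (fun k => b k - c k).
Proof.
  rewrite (eucl_ext d (fun k => a k - c k) (fun k => (a k - b k) + (b k - c k))) by (intros; ring).
  apply (eucl_tri d (fun k => a k - b k) (fun k => b k - c k)).
Qed.

Lemma eucl_sym d a b : eucl d (fun k => a k - b k) = eucl d (fun k => b k - a k).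
Proof. rewrite !eucl_dot. f_equal. unfold dot. apply sumL_ext. intros; ring. Qed.

Lemma eucl_zero d a : (forall k, (k < d)%nat -> a k = 0) -> eucl d a = 0.
Proof.
  intros H. rewrite eucl_dot. rewrite (dot_ext d a a (fun _ => 0) (fun _ => 0)) by auto.
  unfold dot. rewrite (sumL_ext _ _ (fun _ => 0)) by (intros; ring). rewrite sumL_const. rewrite Rmult_0_r. apply sqrt_0.
Qed.

Lemma proj_le d e z : eucl d e <= 1 -> dot d e z <= eucl d z.
Proof.
  intros He. apply Rle_trans with (eucl d e * eucl d z); [apply CS|].
  assert (H := eucl_ge0 d z). assert (H' := eucl_ge0 d e). nra.
Qed.

Lemma eucl_opp d z : eucl d (fun k => - z k) = eucl d z.
Proof. rewrite !eucl_dot. f_equal. unfold dot. apply sumL_ext. intros; ring. Qed.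

Lemma dot_oppr d e z : dot d e (fun k => - z k) = - dot d e z.
Proof.
  unfold dot. rewrite <- (Rmult_1_l (sumL _ (fun k => e k * z k))).
  rewrite Ropp_mult_distr_l, <- sumL_scal. apply sumL_ext; intros; ring.
Qed.

Lemma proj_abs d e z : eucl d e <= 1 -> Rabs (dot d e z) <= eucl d z.
Proof.
  intros He. apply Rabs_le. split.
  - assert (H := proj_le d e (fun k => - z k) He).
    rewrite dot_oppr, eucl_opp in H. lra.
  - apply proj_le; auto.
Qed.

Lemma unit_vec d w : 0 < eucl d w ->
  eucl d (fun k => / eucl d w * w k) = 1 /\ dot d (fun k => / eucl d w * w k) w = eucl d w.
Proof.
  intros Hp.
  assert (Hd : dot d w w = eucl d w * eucl d w) by (rewrite eucl_sq; auto).
  split.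
  - rewrite (eucl_dot d (fun k => / eucl d w * w k)).
    rewrite (dot_scall d w (fun k => / eucl d w * w k)).
    rewrite (dot_comm d w). rewrite dot_scall, Hd.
    replace (/ eucl d w * (/ eucl d w * (eucl d w * eucl d w))) with 1 by (field; lra). apply sqrt_1.
  - rewrite dot_scall, Hd. field. lra.
Qed.
Lemma ballR x e y : ball x e y <-> Rabs (y - x) < e.
Proof. reflexivity. Qed.

Lemma ballR1 (x e y : R) : ball x e y -> Rabs (y - x) < e.
Proof. intros H; exact H. Qed.
Ltac fixball H := apply ballR1 in H; cbn [pos] in H.

Lemma flim_plus {F : (R -> Prop) -> Prop} {FF : Filter F} (f g : R -> R) a b :
  filterlim f F (locally a) -> filterlim g F (locally b) ->
  filterlim (fun s => f s + g s) F (locally (a + b)).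
Proof. intros Hf Hg. eapply filterlim_comp_2; [exact Hf|exact Hg|]. apply (filterlim_plus a b). Qed.

Lemma flim_mult {F : (R -> Prop) -> Prop} {FF : Filter F} (f g : R -> R) a b :
  filterlim f F (locally a) -> filterlim g F (locally b) ->
  filterlim (fun s => f s * g s) F (locally (a * b)).
Proof. intros Hf Hg. eapply filterlim_comp_2; [exact Hf|exact Hg|]. apply (filterlim_mult a b). Qed.

Lemma flim_const {F : (R -> Prop) -> Prop} {FF : Filter F} (a : R) :
  filterlim (fun _ => a) F (locally a).
Proof. apply filterlim_const. Qed.

Lemma flim_minus {F : (R -> Prop) -> Prop} {FF : Filter F} (f g : R -> R) a b :
  filterlim f F (locally a) -> filterlim g F (locally b) ->
  filterlim (fun s => f s - g s) F (locally (a - b)).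
Proof.
  intros Hf Hg. unfold Rminus.
  apply flim_plus; auto.
  apply (filterlim_ext (fun s => (-1) * g s)); [intros; ring|].
  replace (- b) with (-1 * b) by ring. apply flim_mult; auto. apply flim_const.
Qed.

Lemma flim_sumL {F : (R -> Prop) -> Prop} {FF : Filter F} l (f : nat -> R -> R) (L : nat -> R) :
  (forall k, In k l -> filterlim (f k) F (locally (L k))) ->
  filterlim (fun s => sumL l (fun k => f k s)) F (locally (sumL l L)).
Proof.
  induction l as [|a l IH]; intros H.
  - unfold sumL; simpl. apply flim_const.
  - unfold sumL in *; simpl. apply flim_plus.
    + apply H; left; auto.
    + apply IH; intros; apply H; right; auto.
Qed.

Lemma flim_dot {F : (R -> Prop) -> Prop} {FF : Filter F} d (A B : R -> nat -> R) (a b : nat -> R) :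
  (forall k, (k < d)%nat -> filterlim (fun s => A s k) F (locally (a k))) ->
  (forall k, (k < d)%nat -> filterlim (fun s => B s k) F (locally (b k))) ->
  filterlim (fun s => dot d (A s) (B s)) F (locally (dot d a b)).
Proof.
  intros HA HB. unfold dot.
  apply (flim_sumL (seq 0 d) (fun k s => A s k * B s k) (fun k => a k * b k)).
  intros k Hk. apply in_seq in Hk. apply flim_mult; [apply HA|apply HB]; lia.
Qed.

Lemma within_sub (D1 D2 : R -> Prop) (f : R -> R) u l :
  (forall s, D1 s -> D2 s) ->
  filterlim f (within D2 (locally u)) (locally l) -> filterlim f (within D1 (locally u)) (locally l).
Proof.
  intros Hs H P HP. specialize (H P HP). unfold filtermap, within in *.
  eapply filter_imp; [|exact H]. simpl. intros x Hx H1. apply Hx, Hs, H1.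
Qed.

Lemma within_shift (D : R -> Prop) (f : R -> R) u l al :
  filterlim f (within D (locally (u - al))) (locally l) ->
  filterlim (fun s => f (s - al)) (within (fun s => D (s - al)) (locally u)) (locally l).
Proof.
  intros H P HP. specialize (H P HP). unfold filtermap, within in *.
  destruct H as [eps Heps]. exists eps. intros y Hy HD. apply Heps; auto.
  apply ballR. fixball Hy. replace (y - al - (u - al)) with (y - u) by ring. auto.
Qed.

Lemma within_interior (D : R -> Prop) (f : R -> R) u l (eps : posreal) :
  (forall s, Rabs (s - u) < eps -> D s) ->
  filterlim f (within D (locally u)) (locally l) -> filterlim f (locally u) (locally l).
Proof.
  intros Hs H P HP. specialize (H P HP). unfold filtermap, within in *.
  destruct H as [e He]. exists (mkposreal _ (Rmin_stable_in_posreal e eps)).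
  intros y Hy. fixball Hy. apply He.
  - apply ballR. apply Rlt_le_trans with (1 := Hy). apply Rmin_l.
  - apply Hs. apply Rlt_le_trans with (1 := Hy). apply Rmin_r.
Qed.

Lemma cont_within (f : R -> R) u l : filterlim f (locally u) (locally l) ->
  forall D, filterlim f (within D (locally u)) (locally l).
Proof.
  intros H D P HP. specialize (H P HP). unfold filtermap, within in *.
  eapply filter_imp; [|exact H]. simpl; auto.
Qed.

Lemma is_derive_sumL l (f : nat -> R -> R) (df : nat -> R) t :
  (forall k, In k l -> is_derive (f k) t (df k)) ->
  is_derive (fun s => sumL l (fun k => f k s)) t (sumL l df).
Proof.
  induction l as [|a l IH]; intros H.
  - unfold sumL; simpl. apply (is_derive_const 0 t).
  - unfold sumL in *; simpl. apply (is_derive_plus (f a) (fun s => fold_right Rplus 0 (map (fun k => f k s) l))).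
    + apply H; left; auto.
    + apply IH; intros; apply H; right; auto.
Qed.

Lemma is_derive_dot d (e : nat -> R) (V : R -> nat -> R) (DV : nat -> R) t :
  (forall k, (k < d)%nat -> is_derive (fun s => V s k) t (DV k)) ->
  is_derive (fun s => dot d e (V s)) t (dot d e DV).
Proof.
  intros H. unfold dot. apply (is_derive_sumL (seq 0 d) (fun k s => e k * V s k) (fun k => e k * DV k)).
  intros k Hk. apply in_seq in Hk. apply is_derive_scal. apply H; lia.
Qed.

Lemma is_derive_shift (f : R -> R) df t al :
  is_derive f (t - al) df -> is_derive (fun s => f (s - al)) t df.
Proof.
  intros H. apply is_derive_Reals. apply is_derive_Reals in H.
  intros eps Heps. destruct (H eps Heps) as [del Hd]. exists del. intros h Hh Hh2.
  replace (t + h - al) with (t - al + h) by ring. apply Hd; auto.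
Qed.

Definition clamp (a b u : R) := Rmax a (Rmin b u).

Lemma clamp_lip a b u v : a <= b -> Rabs (clamp a b u - clamp a b v) <= Rabs (u - v).
Proof.
  intros Hab. unfold clamp, Rmax, Rmin.
  repeat destruct Rle_dec; unfold Rabs; repeat destruct Rcase_abs; lra.
Qed.

Lemma clamp_in a b u : a <= b -> a <= clamp a b u <= b.
Proof. intros Hab. unfold clamp, Rmax, Rmin. repeat destruct Rle_dec; lra. Qed.

Lemma clamp_id a b u : a <= u <= b -> clamp a b u = u.
Proof. intros Hab. unfold clamp, Rmax, Rmin. repeat destruct Rle_dec; lra. Qed.

Lemma mvt_le (f df : R -> R) a b M :
  a <= b ->
  (forall u, a <= u <= b -> filterlim f (within (fun s => a <= s <= b) (locally u)) (locally (f u))) ->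
  (forall u, a < u < b -> is_derive f u (df u)) ->
  (forall u, a < u < b -> df u <= M) ->
  f b - f a <= M * (b - a).
Proof.
  intros Hab Hc Hd HM.
  destruct (Req_dec a b) as [<-|Hne]; [lra|].
  set (g := fun u => f (clamp a b u)).
  set (dg := fun u => match Rlt_dec a u with left _ => match Rlt_dec u b with left _ => df u | right _ => M end | right _ => M end).
  assert (Hg : forall u, a < u < b -> is_derive g u (dg u)).
  { intros u Hu. unfold dg. destruct (Rlt_dec a u); [|lra]. destruct (Rlt_dec u b); [|lra].
    apply (is_derive_ext_loc f g). 2: apply Hd; auto.
    exists (mkposreal _ (Rmin_stable_in_posreal (mkposreal (u - a) ltac:(lra)) (mkposreal (b - u) ltac:(lra)))).
    intros y Hy. fixball Hy. unfold g. rewrite clamp_id; auto.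
    assert (Rmin (u - a) (b - u) <= u - a) by apply Rmin_l.
    assert (Rmin (u - a) (b - u) <= b - u) by apply Rmin_r.
    apply Rabs_lt_between in Hy. lra. }
  assert (Hgc : forall u, Rmin a b <= u <= Rmax a b -> continuity_pt g u).
  { intros u Hu. apply continuity_pt_filterlim.
    unfold g. eapply filterlim_comp with (G := within (fun s => a <= s <= b) (locally (clamp a b u))).
    - intros P HP. unfold filtermap, within in *. destruct HP as [eps He].
      exists eps. intros y Hy. apply He.
      + apply ballR. fixball Hy. eapply Rle_lt_trans; [apply clamp_lip; auto|auto].
      + apply clamp_in; auto.
    - apply Hc. apply clamp_in; auto. }
  rewrite Rmin_left in Hgc by lra. rewrite Rmax_right in Hgc by lra.
  destruct (MVT_gen g a b dg) as [c [Hc1 Hc2]].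
  - rewrite Rmin_left, Rmax_right by lra. auto.
  - rewrite Rmin_left, Rmax_right by lra. auto.
  - unfold g in Hc2. rewrite !clamp_id in Hc2 by lra. rewrite Hc2.
    apply Rmult_le_compat_r; [lra|]. unfold dg.
    destruct (Rlt_dec a c); [|lra]. destruct (Rlt_dec c b); [|lra]. apply HM; lra.
Qed.

Lemma vec_mvt d (V DV : R -> nat -> R) a b M :
  a <= b -> 0 <= M ->
  (forall k u, (k < d)%nat -> a <= u <= b ->
     filterlim (fun s => V s k) (within (fun s => a <= s <= b) (locally u)) (locally (V u k))) ->
  (forall k u, (k < d)%nat -> a < u < b -> is_derive (fun s => V s k) u (DV u k)) ->
  (forall u, a < u < b -> eucl d (DV u) <= M) ->
  eucl d (fun k => V b k - V a k) <= M * (b - a).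
Proof.
  intros Hab HM Hc Hd HB.
  set (w := fun k => V b k - V a k).
  destruct (Req_dec (eucl d w) 0) as [H0|Hpos].
  - fold w. rewrite H0. apply Rmult_le_pos; lra.
  - assert (Hp : 0 < eucl d w) by (assert (H := eucl_ge0 d w); lra).
    destruct (unit_vec d w Hp) as [He1 He2].
    set (e := fun k => / eucl d w * w k) in *.
    assert (H := mvt_le (fun s => dot d e (V s)) (fun s => dot d e (DV s)) a b M Hab).
    fold w. rewrite <- He2.
    replace (dot d e w) with (dot d e (V b) - dot d e (V a)) by (unfold w; rewrite dot_minusr; auto).
    apply H.
    + intros u Hu. apply flim_dot.
      * intros; apply flim_const.
      * intros k Hk. apply Hc; auto.
    + intros u Hu. apply is_derive_dot. intros k Hk. apply Hd; auto.
    + intros u Hu. eapply Rle_trans; [apply proj_le; lra|]. apply HB; auto.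
Qed.

Lemma doi_interior a b f f' t : a < t < b -> deriv_on_interval a b f f' -> is_derive f t (f' t).
Proof.
  intros Ht H. specialize (H t ltac:(lra)).
  apply is_derive_Reals. intros eps Heps.
  assert (HP : locally (f' t) (fun y => Rabs (y - f' t) < eps)).
  { exists (mkposreal eps Heps). intros y Hy. apply ballR in Hy. auto. }
  specialize (H _ HP). unfold filtermap, within in H. destruct H as [del Hdel].
  assert (Hm : 0 < Rmin del (Rmin (t - a) (b - t))).
  { apply Rmin_pos; [apply cond_pos|apply Rmin_pos; lra]. }
  exists (mkposreal _ Hm). intros h Hh0 Hh. simpl in Hh.
  assert (Rmin del (Rmin (t - a) (b - t)) <= del) by apply Rmin_l.
  assert (Rmin del (Rmin (t - a) (b - t)) <= Rmin (t - a) (b - t)) by apply Rmin_r.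
  assert (Rmin (t - a) (b - t) <= t - a) by apply Rmin_l.
  assert (Rmin (t - a) (b - t) <= b - t) by apply Rmin_r.
  apply Rabs_lt_between in Hh.
  apply Hdel.
  - apply ballR. unfold minus, plus, opp; simpl. replace (h + - 0) with h by ring. apply Rabs_lt_between. lra.
  - split; auto. lra.
Qed.

Lemma fold_Rmax_ge (l : list R) x : In x l -> x <= fold_right Rmax 0 l.
Proof.
  induction l as [|a l IH]; simpl; [tauto|]. intros [->|H].
  - apply Rmax_l.
  - eapply Rle_trans; [apply IH; auto|apply Rmax_r].
Qed.

Lemma fold_Rmax_le (l : list R) M : 0 <= M -> (forall x, In x l -> x <= M) -> fold_right Rmax 0 l <= M.
Proof.
  induction l as [|a l IH]; simpl; intros HM H; auto.
  apply Rmax_lub; [apply H; left; auto|apply IH; auto].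
Qed.

Lemma fold_Rmax_ge0 (l : list R) : 0 <= fold_right Rmax 0 l.
Proof. induction l; simpl; [lra|]. eapply Rle_trans; [exact IHl|apply Rmax_r]. Qed.

Lemma diam_ge N d f t i j : (i < N)%nat -> (j < N)%nat ->
  eucl d (fun k => f i t k - f j t k) <= diam N d f t.
Proof.
  intros Hi Hj. unfold diam. apply fold_Rmax_ge. apply in_map_iff.
  exists (i, j). split; auto. apply in_prod_iff. split; apply in_seq; lia.
Qed.

Lemma diam_le N d f t M : 0 <= M ->
  (forall i j, (i < N)%nat -> (j < N)%nat -> eucl d (fun k => f i t k - f j t k) <= M) ->
  diam N d f t <= M.
Proof.
  intros HM H. unfold diam. apply fold_Rmax_le; auto.
  intros y Hy. apply in_map_iff in Hy. destruct Hy as [[i j] [<- Hin]].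
  apply in_prod_iff in Hin. destruct Hin as [Hi Hj]. apply in_seq in Hi. apply in_seq in Hj.
  simpl. apply H; lia.
Qed.

Lemma diam_ge0 N d f t : 0 <= diam N d f t.
Proof. apply fold_Rmax_ge0. Qed.

Lemma bernoulli x n : 0 <= x -> 1 + INR n * x <= (1 + x) ^ n.
Proof.
  intros Hx. induction n as [|n IH]; [simpl; lra|].
  rewrite S_INR. simpl pow. assert (0 <= INR n) by apply pos_INR.
  assert (0 <= (1 + x) ^ n) by (apply pow_le; lra). nra.
Qed.

Section Zseq.
Variable s : R.
Hypothesis Hs : 0 < s.
Let r := sqrt (s * (1 + s)).
Let a := 1 + s + r.
Let b := 1 + s - r.
Definition Zn (n : nat) := / (2 * r) * (a ^ (S n) - b ^ (S n)).
Definition Yn (n : nat) := (a ^ n + b ^ n) / 2.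

Lemma r_pos : 0 < r.
Proof. unfold r. apply sqrt_lt_R0. nra. Qed.
Lemma r_sq : r * r = s * (1 + s).
Proof. unfold r. apply sqrt_sqrt. nra. Qed.
Lemma b_nonneg : 0 <= b.
Proof.
  unfold b. assert (H := r_sq). assert (H2 := r_pos).
  assert (r <= 1 + s); [|lra]. nra.
Qed.
Lemma b_le_a : b <= a.
Proof. unfold a, b. assert (H2 := r_pos). lra. Qed.

Lemma Zn_rec n : Zn (S n) = (1 + s) * Zn n + Yn (S n).
Proof.
  unfold Zn, Yn. assert (H2 := r_pos).
  replace (a ^ S (S n)) with (a * a ^ S n) by reflexivity.
  replace (b ^ S (S n)) with (b * b ^ S n) by reflexivity.
  set (A := a ^ S n). set (B := b ^ S n). unfold a, b. field. lra.
Qed.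

Lemma Yn_rec n : Yn (S n) = Yn n + s * Zn n.
Proof.
  unfold Zn, Yn. assert (H := r_sq). assert (H2 := r_pos).
  replace (a ^ S (S n)) with (a * a ^ S n) by reflexivity.
  replace (b ^ S (S n)) with (b * b ^ S n) by reflexivity.
  replace (a ^ S n) with (a * a ^ n) by reflexivity.
  replace (b ^ S n) with (b * b ^ n) by reflexivity.
  set (A := a ^ n). set (B := b ^ n).
  apply Rminus_diag_uniq.
  replace ((a * A + b * B) / 2 - ((A + B) / 2 + s * (/ (2 * r) * (a * A - b * B))))
    with ((A * (r * r - s - s * s) - B * (r * r - s - s * s)) / (2 * r)) by (unfold a, b; field; lra).
  rewrite H. field. lra.
Qed.

Lemma Zn_nonneg n : 0 <= Zn n.
Proof.
  unfold Zn. assert (H2 := r_pos). apply Rmult_le_pos.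
  - apply Rlt_le, Rinv_0_lt_compat; lra.
  - assert (b ^ S n <= a ^ S n); [|lra]. apply pow_incr. split; [apply b_nonneg|apply b_le_a].
Qed.

Lemma Yn_ge1 n : 1 <= Yn n.
Proof.
  induction n as [|n IH].
  - unfold Yn; simpl; lra.
  - rewrite Yn_rec. assert (0 <= s * Zn n) by (apply Rmult_le_pos; [lra|apply Zn_nonneg]). lra.
Qed.

Lemma Yn_ge n : (1 <= n)%nat -> 1 + s <= Yn n.
Proof.
  induction n as [|n IH]; intros Hn; [lia|].
  destruct (Nat.eq_dec n 0) as [->|Hn0].
  - unfold Yn, a, b; simpl; lra.
  - rewrite Yn_rec. assert (0 <= s * Zn n) by (apply Rmult_le_pos; [lra|apply Zn_nonneg]).
    specialize (IH ltac:(lia)). lra.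
Qed.

Lemma Zn0 : Zn 0 = 1.
Proof. unfold Zn. assert (H2 := r_pos). unfold a, b. simpl. field. lra. Qed.

Lemma Zn_lower n : (1 + 2 * s) ^ (S n) <= 2 * s * Zn n + 1.
Proof.
  induction n as [|n IH].
  - rewrite Zn0. simpl. lra.
  - rewrite Zn_rec, Yn_rec.
    assert (H1 := Yn_ge1 n). assert (H0 := Zn_nonneg n).
    replace ((1 + 2 * s) ^ S (S n)) with ((1 + 2 * s) * (1 + 2 * s) ^ S n) by reflexivity.
    nra.
Qed.
End Zseq.

Lemma Zsig_Zn s k : 0 < s -> Zsig s (Z.of_nat k) = Zn s k.
Proof.
  intros Hs. unfold Zsig, Zn. replace (Z.to_nat (Z.of_nat k + 1)) with (S k) by lia. reflexivity.
Qed.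

Lemma cont_ind (a : R) (P : R -> Prop) :
  (forall t, a <= t -> (forall s, a <= s < t -> P s) -> exists del, 0 < del /\ forall s, t <= s < t + del -> P s) ->
  forall t, a <= t -> P t.
Proof.
  intros H t1 Ht1. apply NNPP. intros Hn.
  set (E := fun t => a <= t <= t1 /\ forall s, a <= s < t -> P s).
  assert (HEb : bound E) by (exists t1; intros y [Hy _]; lra).
  assert (HEa : exists x, E x) by (exists a; split; [lra|intros; lra]).
  destruct (completeness E HEb HEa) as [m [Hub Hlub]].
  assert (Ham : a <= m) by (apply Hub; split; [lra|intros; lra]).
  assert (Hmt : m <= t1) by (apply Hlub; intros y [Hy _]; lra).
  assert (Hbelow : forall s, a <= s < m -> P s).
  { intros s Hs. apply NNPP. intros Hs2.
    assert (Hm' : m <= s).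
    { apply Hlub. intros y [Hy Hy2]. destruct (Rle_dec y s) as [|Hys]; auto.
      exfalso. apply Hs2. apply Hy2. lra. }
    lra. }
  destruct (H m Ham Hbelow) as [del [Hdel Hd]].
  destruct (Rlt_dec m t1) as [Hlt|Hge].
  - set (m' := Rmin (m + del / 2) t1).
    assert (Hm'E : E m').
    { assert (m' <= t1) by apply Rmin_r.
      assert (a <= m') by (unfold m'; apply Rmin_glb; lra).
      split; [lra|].
      intros s Hs. destruct (Rlt_dec s m); [apply Hbelow; lra|].
      apply Hd. split; [lra|]. assert (m' <= m + del / 2) by apply Rmin_l. lra. }
    assert (m' <= m) by (apply Hub; auto).
    assert (m < m'); [|lra]. unfold m'. apply Rmin_glb_lt; lra.
  - apply Hn. apply Hd. lra.
Qed.

Lemma cont_diff_pos (h : R -> R) t : filterlim h (locally t) (locally (h t)) -> 0 < h t ->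
  exists del, 0 < del /\ forall s, Rabs (s - t) < del -> 0 < h s.
Proof.
  intros Hc Hp. assert (He : 0 < h t / 2) by lra.
  destruct (proj1 (filterlim_locally h (h t)) Hc (mkposreal _ He)) as [del Hd].
  exists del. split; [apply cond_pos|]. intros s Hs.
  assert (Hb : ball t del s) by (apply ballR; exact Hs).
  specialize (Hd s Hb). fixball Hd. apply Rabs_lt_between in Hd. lra.
Qed.

Lemma closure_left (f g : R -> R) t del0 : 0 < del0 ->
  filterlim f (locally t) (locally (f t)) -> filterlim g (locally t) (locally (g t)) ->
  (forall s, t - del0 < s < t -> f s < g s) -> f t <= g t.
Proof.
  intros Hd0 Hf Hg H. apply Rnot_lt_le. intros Hlt.
  destruct (cont_diff_pos (fun s => f s - g s) t (flim_minus f g (f t) (g t) Hf Hg) ltac:(lra)) as [del [Hdel Hd]].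
  set (s := t - Rmin del del0 / 2).
  assert (Hm : 0 < Rmin del del0) by (apply Rmin_pos; lra).
  assert (Rmin del del0 <= del) by apply Rmin_l. assert (Rmin del del0 <= del0) by apply Rmin_r.
  specialize (Hd s). specialize (H s). unfold s in *.
  assert (Rabs (t - Rmin del del0 / 2 - t) < del) by (rewrite Rabs_left; lra).
  specialize (Hd H2). specialize (H ltac:(lra)). lra.
Qed.

Lemma ext_right (f g : R -> R) t :
  filterlim f (locally t) (locally (f t)) -> filterlim g (locally t) (locally (g t)) ->
  f t < g t -> exists del, 0 < del /\ forall s, t <= s < t + del -> f s < g s.
Proof.
  intros Hf Hg Hlt.
  destruct (cont_diff_pos (fun s => g s - f s) t (flim_minus g f (g t) (f t) Hg Hf) ltac:(lra)) as [del [Hdel Hd]].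
  exists del. split; auto. intros s Hs. assert (Rabs (s - t) < del) by (rewrite Rabs_pos_eq; lra).
  specialize (Hd s H). lra.
Qed.

Lemma fin_delta (l : list nat) (Q : nat -> R -> Prop) t :
  (forall i, In i l -> exists del, 0 < del /\ forall s, t <= s < t + del -> Q i s) ->
  exists del, 0 < del /\ forall s, t <= s < t + del -> forall i, In i l -> Q i s.
Proof.
  induction l as [|a l IH]; intros H.
  - exists 1. split; [lra|]. intros s _ i [].
  - destruct (H a (or_introl eq_refl)) as [d1 [Hd1 H1]].
    destruct IH as [d2 [Hd2 H2]]; [intros; apply H; right; auto|].
    exists (Rmin d1 d2). split; [apply Rmin_pos; auto|].
    assert (Rmin d1 d2 <= d1) by apply Rmin_l. assert (Rmin d1 d2 <= d2) by apply Rmin_r.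
    intros s Hs i [<-|Hi].
    + apply H1; lra.
    + apply H2; auto; lra.
Qed.

Lemma within_sub_int (f : R -> R) a b a' b' u :
  a <= a' -> b' <= b -> a' <= u <= b' ->
  (forall u, a <= u <= b -> filterlim f (within (fun s => a <= s <= b) (locally u)) (locally (f u))) ->
  filterlim f (within (fun s => a' <= s <= b') (locally u)) (locally (f u)).
Proof.
  intros H1 H2 Hu H. apply (within_sub _ (fun s => a <= s <= b)).
  - intros; lra.
  - apply H; lra.
Qed.

Lemma mvt_le1 (f df : R -> R) a b c M :
  a <= b ->
  (forall u, a <= u <= b -> filterlim f (within (fun s => a <= s <= b) (locally u)) (locally (f u))) ->
  (forall u, a < u < b -> u <> c -> is_derive f u (df u) /\ df u <= M) ->
  f b - f a <= M * (b - a).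
Proof.
  intros Hab Hc Hd.
  destruct (Rlt_dec a c) as [Hac|Hac]; [destruct (Rlt_dec c b) as [Hcb|Hcb]|].
  - assert (H1 : f c - f a <= M * (c - a)).
    { apply (mvt_le f df); try lra.
      - intros u Hu. apply (within_sub_int f a b); auto; lra.
      - intros u Hu; apply Hd; lra.
      - intros u Hu; apply Hd; lra. }
    assert (H2 : f b - f c <= M * (b - c)).
    { apply (mvt_le f df); try lra.
      - intros u Hu. apply (within_sub_int f a b); auto; lra.
      - intros u Hu; apply Hd; lra.
      - intros u Hu; apply Hd; lra. }
    lra.
  - apply (mvt_le f df); auto; intros u Hu; apply Hd; lra.
  - apply (mvt_le f df); auto; intros u Hu; apply Hd; lra.
Qed.

Lemma mvt_le2 (f df : R -> R) a b c1 c2 M :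
  a <= b ->
  (forall u, a <= u <= b -> filterlim f (within (fun s => a <= s <= b) (locally u)) (locally (f u))) ->
  (forall u, a < u < b -> u <> c1 -> u <> c2 -> is_derive f u (df u) /\ df u <= M) ->
  f b - f a <= M * (b - a).
Proof.
  intros Hab Hc Hd.
  destruct (Rlt_dec a c1) as [Hac|Hac]; [destruct (Rlt_dec c1 b) as [Hcb|Hcb]|].
  - assert (H1 : f c1 - f a <= M * (c1 - a)).
    { apply (mvt_le1 f df a c1 c2); try lra.
      - intros u Hu. apply (within_sub_int f a b); auto; lra.
      - intros u Hu Hu2; apply Hd; lra. }
    assert (H2 : f b - f c1 <= M * (b - c1)).
    { apply (mvt_le1 f df c1 b c2); try lra.
      - intros u Hu. apply (within_sub_int f a b); auto; lra.
      - intros u Hu Hu2; apply Hd; lra. }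
    lra.
  - apply (mvt_le1 f df a b c2); auto; intros u Hu Hu2; apply Hd; lra.
  - apply (mvt_le1 f df a b c2); auto; intros u Hu Hu2; apply Hd; lra.
Qed.
Lemma N2core (tau w kap yy beta zz : R) :
  0 < tau -> 4 * tau <= 1 -> 1 <= w -> w * (1 - tau) <= 1 -> tau * w <= 1/3 ->
  0 <= yy <= tau * w -> kap * (1 - yy) = w -> 1 <= kap -> 0 < beta ->
  2 * tau + tau * tau <= zz * ((1 + tau) * (1 + tau)) ->
  beta * (1 - 2 * zz) >= 4 * tau ->
  4 * tau * (kap - w) < beta * zz.
Proof.
  intros H5 H4 H8 H2 H1 H0 H H7 Hb Hz1' Hb3.
  set (A := kap - w).
  assert (HA0 : 0 <= A).
  { unfold A. assert (kap * (1 - yy) <= kap) by nra. lra. }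
  assert (HA1 : A * (1 - tau * w) <= tau * w * w).
  { assert (HAy : A * (1 - yy) = w * yy) by (unfold A; nra).
    assert (A * (1 - tau * w) <= A * (1 - yy)) by nra. nra. }
  assert (Hpos : 0 < 1 - tau * w) by lra.
  assert (HA2 : A * ((1 - tau) * (1 - 2 * tau)) <= tau).
  { assert (Hw2 : w * w * ((1 - tau) * (1 - 2 * tau)) <= 1 - tau * w).
    { assert (w * (1 - tau) * (w * (1 - 2 * tau)) <= 1 * (w * (1 - 2 * tau))).
      { apply Rmult_le_compat_r; nra. }
      nra. }
    apply Rmult_le_reg_r with (1 - tau * w); auto.
    assert (0 <= (1 - tau) * (1 - 2 * tau)) by nra.
    assert (A * (1 - tau * w) * ((1 - tau) * (1 - 2 * tau)) <= tau * w * w * ((1 - tau) * (1 - 2 * tau))) by (apply Rmult_le_compat_r; auto).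
    nra. }
  assert (Hz2 : 0 < 1 - 2 * zz).
  { assert (0 < beta * (1 - 2 * zz)) by lra.
    destruct (Rlt_le_dec 0 (1 - 2 * zz)); auto.
    assert (beta * (1 - 2 * zz) <= 0) by nra. lra. }
  apply Rnot_le_lt. intros Hc.
  assert (Hzz : 0 <= zz) by nra.
  assert (Hs1 : 4 * tau * zz <= beta * zz * (1 - 2 * zz)).
  { replace (beta * zz * (1 - 2 * zz)) with (zz * (beta * (1 - 2 * zz))) by ring.
    replace (4 * tau * zz) with (zz * (4 * tau)) by ring. apply Rmult_le_compat_l; lra. }
  assert (Hs2 : beta * zz * (1 - 2 * zz) <= 4 * tau * A * (1 - 2 * zz)).
  { apply Rmult_le_compat_r; lra. }
  assert (Hs3 : zz <= A * (1 - 2 * zz)).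
  { apply Rmult_le_reg_l with (4 * tau); lra. }
  assert (Hs4 : zz * ((1 - tau) * (1 - 2 * tau)) <= tau * (1 - 2 * zz)).
  { assert (0 <= (1 - tau) * (1 - 2 * tau)) by nra.
    assert (zz * ((1 - tau) * (1 - 2 * tau)) <= A * (1 - 2 * zz) * ((1 - tau) * (1 - 2 * tau))) by (apply Rmult_le_compat_r; auto).
    assert (A * ((1 - tau) * (1 - 2 * tau)) * (1 - 2 * zz) <= tau * (1 - 2 * zz)) by (apply Rmult_le_compat_r; lra).
    nra. }
  assert (Hs5 : zz * (1 - tau + 2 * tau * tau) <= tau) by nra.
  assert (Hpoly : 0 < 1 - 3 * tau + 2 * tau * tau + 2 * tau * tau * tau) by nra.
  assert (Hp2 : 0 < 1 - tau + 2 * tau * tau) by nra.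
  assert (H10 : (2 * tau + tau * tau) * (1 - tau + 2 * tau * tau) <= zz * ((1 + tau) * (1 + tau)) * (1 - tau + 2 * tau * tau)).
  { apply Rmult_le_compat_r; lra. }
  assert (H11 : zz * (1 - tau + 2 * tau * tau) * ((1 + tau) * (1 + tau)) <= tau * ((1 + tau) * (1 + tau))).
  { apply Rmult_le_compat_r; nra. }
  assert (H12 : (2 * tau + tau * tau) * (1 - tau + 2 * tau * tau) <= tau * ((1 + tau) * (1 + tau))) by nra.
  assert (H13 : tau * (1 - 3 * tau + 2 * tau * tau + 2 * tau * tau * tau) <= 0) by nra.
  assert (0 < tau * (1 - 3 * tau + 2 * tau * tau + 2 * tau * tau * tau)) by (apply Rmult_lt_0_compat; auto).
  lra.
Qed.
Lemma ALGcore (sigma tau C n G Z kap : R) :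
  0 < sigma -> sigma <= tau -> 0 < C -> C + 4 * tau <= 1 -> 2 <= n -> n * sigma < 3 * tau ->
  1 + n * (2 * sigma) <= G -> (1 + 2 * sigma) * G <= 2 * sigma * Z + 1 ->
  1 <= kap -> 3 * (C * tau) + kap <= 2 ->
  C * (n * sigma) * G + kap * G <= Z.
Proof.
  intros Hs Hst HC Ht Hn Hns HG HZ Hk HN1.
  set (c0 := C * (n * sigma) + kap - 1).
  assert (Hc0 : 0 <= c0 <= 1).
  { unfold c0. assert (0 <= C * (n * sigma)) by (apply Rmult_le_pos; nra).
    assert (C * (n * sigma) <= C * (3 * tau)) by (apply Rmult_le_compat_l; lra). lra. }
  assert (Hsg : 2 * sigma * c0 <= 1 / 2) by nra.
  assert (HG1 : 1 <= (1 + n * (2 * sigma)) * (1 - 2 * sigma * c0)).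
  { assert (2 * sigma * c0 <= 2 * sigma) by nra.
    assert (n * (2 * sigma) * (2 * sigma * c0) <= n * (2 * sigma) * (1/2)) by (apply Rmult_le_compat_l; nra).
    nra. }
  assert (HG2 : (1 + n * (2 * sigma)) * (1 - 2 * sigma * c0) <= G * (1 - 2 * sigma * c0)).
  { apply Rmult_le_compat_r; lra. }
  assert (H3 : 2 * sigma * (C * (n * sigma) * G + kap * G) <= 2 * sigma * Z).
  { unfold c0 in *. nra. }
  apply Rmult_le_reg_l with (2 * sigma); lra.
Qed.

Lemma is_derive_Rminus f g t a b : is_derive f t a -> is_derive g t b -> is_derive (fun s => f s - g s) t (a - b).
Proof. intros Ha Hb. exact (is_derive_minus f g t a b Ha Hb). Qed.
Lemma is_derive_Rplus f g t a b : is_derive f t a -> is_derive g t b -> is_derive (fun s => f s + g s) t (a + b).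
Proof. intros Ha Hb. exact (is_derive_plus f g t a b Ha Hb). Qed.
Lemma is_derive_expdecay (L C T s : R) : is_derive (fun u => L * exp (- C * (u - T))) s (- C * L * exp (- C * (s - T))).
Proof. auto_derive; [auto|unfold Rminus; ring]. Qed.
Lemma flim_expdecay (L C T u : R) D : filterlim (fun s => L * exp (- C * (s - T))) (within D (locally u)) (locally (L * exp (- C * (u - T)))).
Proof.
  apply cont_within. apply (proj1 (continuity_pt_filterlim (fun s => L * exp (- C * (s - T))) u)). apply derivable_continuous_pt.
  exists (- C * L * exp (- C * (u - T))). apply is_derive_Reals. apply is_derive_expdecay.
Qed.

Lemma left_deriv (H : R -> R) t D a : a < t -> is_derive H t D -> H t = 0 ->
  (forall s, a <= s < t -> H s < 0) -> 0 <= D.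
Proof.
  intros Hat Hd H0 Hneg. apply Rnot_lt_le. intros HD.
  apply is_derive_Reals in Hd. destruct (Hd (- D / 2) ltac:(lra)) as [del Hdel].
  set (h := - Rmin del (t - a) / 2).
  assert (Hm : 0 < Rmin del (t - a)) by (apply Rmin_pos; [apply cond_pos|lra]).
  assert (Rmin del (t - a) <= del) by apply Rmin_l. assert (Rmin del (t - a) <= t - a) by apply Rmin_r.
  assert (Hh0 : h <> 0) by (unfold h; lra).
  assert (Hh1 : Rabs h < del) by (unfold h; rewrite Rabs_left; lra).
  specialize (Hdel h Hh0 Hh1). rewrite H0 in Hdel.
  assert (Hs := Hneg (t + h) ltac:(unfold h; lra)).
  apply Rabs_lt_between in Hdel.
  assert (Hq : (H (t + h) - 0) / h < D / 2) by lra.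
  assert (Hhn : h < 0) by (unfold h; lra).
  assert (0 < (H (t + h) - 0) / h).
  { unfold Rdiv. replace ((H (t + h) - 0) * / h) with ((- H (t + h)) * / (- h)) by (field; lra).
    apply Rmult_lt_0_compat; [lra|apply Rinv_0_lt_compat; lra]. }
  lra.
Qed.

Lemma flim_expdecay_loc (L C T u : R) : filterlim (fun s => L * exp (- C * (s - T))) (locally u) (locally (L * exp (- C * (u - T)))).
Proof.
  apply (proj1 (continuity_pt_filterlim (fun s => L * exp (- C * (s - T))) u)). apply derivable_continuous_pt.
  exists (- C * L * exp (- C * (u - T))). apply is_derive_Reals. apply is_derive_expdecay.
Qed.

Lemma mul_le_neg_r (a b x : R) : x <= 0 -> a <= b -> b * x <= a * x.
Proof. intros Hx Hab. rewrite (Rmult_comm b), (Rmult_comm a). apply Rmult_le_compat_neg_l; auto. Qed.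
Lemma mul_nonneg_nonpos (c x : R) : 0 <= c -> x <= 0 -> c * x <= 0.
Proof. intros Hc Hx. rewrite <- (Rmult_0_r c). apply Rmult_le_compat_l; auto. Qed.

Lemma sq_lt a b : 0 <= a -> 0 < b -> a * a < b * b -> a < b.
Proof. intros Ha Hb H. apply Rnot_le_lt. intros Hc. assert (b * b <= a * a) by (apply Rmult_le_compat; lra). lra. Qed.
Lemma sq_le a b : 0 <= a -> 0 < b -> a * a <= b * b -> a <= b.
Proof. intros Ha Hb H. apply Rnot_lt_le. intros Hc. assert (b * b < a * a) by (apply Rmult_le_0_lt_compat; lra). lra. Qed.
Lemma lt_sq a b : 0 <= a -> a < b -> a * a < b * b.
Proof. intros Ha H. apply Rmult_le_0_lt_compat; lra. Qed.


Section Main.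
Variables (N d : nat) (sigma tau : R) (psi : R -> R) (x0 v0 x v : nat -> R -> nat -> R)
  (K : Z) (beta C Dx Dv : R).
Hypothesis HN : (2 <= N)%nat.
Hypothesis Hd1 : (1 <= d)%nat.
Hypothesis Hs0 : 0 <= sigma.
Hypothesis Hst : sigma <= tau.
Hypothesis Hpc : cont_on (fun s => 0 <= s) psi.
Hypothesis Hpm : noninc_on_nonneg psi.
Hypothesis Hpp : forall s, 0 <= s -> 0 < psi s.
Hypothesis Hp1 : forall s, 0 <= s -> psi s <= 1.
Hypothesis Hinit : forall i k, (i < N)%nat -> (k < d)%nat ->
     cont_on (fun s => -tau <= s <= 0) (fun s => v0 i s k) /\
     deriv_on_interval (-tau) 0 (fun s => x0 i s k) (fun s => v0 i s k).
Hypothesis Hsol : forall i k, (i < N)%nat -> (k < d)%nat ->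
     (forall s, -tau <= s <= 0 -> x i s k = x0 i s k /\ v i s k = v0 i s k) /\
     cont_on (fun s => -tau <= s) (fun s => x i s k) /\
     cont_on (fun s => -tau <= s) (fun s => v i s k) /\
     (forall t, 0 < t ->
        is_derive (fun s => x i s k) t (v i t k) /\
        is_derive (fun s => v i s k) t (vel_rhs N d sigma tau psi x v i t k)).
Hypothesis HK1 : 2 * tau <= IZR K * sigma.
Hypothesis HK2 : forall k : Z, 2 * tau <= IZR k * sigma -> (K <= k)%Z.
Hypothesis HDx : is_Delta0 N d tau x0 Dx.
Hypothesis HDv : is_Delta0 N d tau v0 Dv.
Hypothesis Hb : 0 < beta.
Hypothesis Hb2 : 4 * tau <= beta * (2 * exp (-2 * tau) - 1).
Hypothesis HC : 0 < C.
Hypothesis Hcond : (let ZK := Zsig sigma K + Zsig sigma (K - 1) * beta * (1 - (1 + 2 * tau) * exp (-2 * tau)) in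
   let WK := Zsig sigma K - (1 + sigma) * (Zsig sigma (K - 1) + 1) in
   exp (C * tau) * (4 * tau * exp (C * tau) + beta * (1 - exp (-2 * tau))) + C
   <= psi (Dx + WK * Dv
           + exp (C * tau) / C
             * (1 + / beta * exp (2 * tau + C * sigma) + exp (C * tau) * (tau - sigma))
             * ZK * Dv)).

Lemma sig_pos : 0 < sigma.
Proof.
  destruct (Rle_lt_or_eq_dec 0 sigma Hs0) as [|Heq]; auto. exfalso.
  rewrite <- Heq in HK1, HK2, Hst. rewrite Rmult_0_r in HK1.
  assert (Hk := HK2 (K - 1)%Z ltac:(rewrite Rmult_0_r; lra)). lia.
Qed.

Lemma tau_pos : 0 < tau.
Proof. assert (H := sig_pos). lra. Qed.

Lemma K_ge2 : (2 <= K)%Z.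
Proof.
  assert (H := sig_pos). assert (2 <= IZR K).
  { apply Rmult_le_reg_r with sigma; auto. lra. }
  apply le_IZR. simpl. lra.
Qed.

Definition nK := Z.to_nat K.

Lemma nK_eq : INR nK = IZR K.
Proof. unfold nK. rewrite INR_IZR_INZ. f_equal. rewrite Z2Nat.id; auto. assert (H := K_ge2). lia. Qed.

Lemma nK_ge2 : (2 <= nK)%nat.
Proof. unfold nK. assert (H := K_ge2). lia. Qed.

Lemma K_min : (IZR K - 1) * sigma < 2 * tau.
Proof.
  apply Rnot_le_lt. intros H. assert (Hk := HK2 (K - 1)%Z).
  rewrite minus_IZR in Hk. specialize (Hk H). lia.
Qed.

Definition T0 := IZR K * sigma.
Definition w := exp (C * tau).
Definition zz := 1 - exp (-2 * tau).
Definition yy := (tau - sigma) * w.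
Definition kap := w / (1 - yy).
Definition WK := Zsig sigma K - (1 + sigma) * (Zsig sigma (K - 1) + 1).
Definition ZK := Zsig sigma K + Zsig sigma (K - 1) * beta * (1 - (1 + 2 * tau) * exp (-2 * tau)).
Definition Dbar := Dx + WK * Dv + exp (C * tau) / C * (1 + / beta * exp (2 * tau + C * sigma) + exp (C * tau) * (tau - sigma)) * ZK * Dv.
Definition pp := psi Dbar.

Lemma Hc2 : w * (4 * tau * w + beta * zz) + C <= psi Dbar.
Proof. exact Hcond. Qed.

Lemma Delta_nonneg f D : is_Delta0 N d tau f D -> 0 <= D.
Proof. intros [_ [i [j [s [t [_ [_ [_ [_ <-]]]]]]]]]. apply eucl_ge0. Qed.

Lemma Dx_nonneg : 0 <= Dx.
Proof. exact (Delta_nonneg _ _ HDx). Qed.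
Lemma Dv_nonneg : 0 <= Dv.
Proof. exact (Delta_nonneg _ _ HDv). Qed.

Lemma w_ge1 : 1 <= w.
Proof.
  unfold w. assert (H := exp_ineq1_le (C * tau)). assert (0 <= C * tau).
  { apply Rmult_le_pos; [lra|]. assert (H1 := tau_pos); lra. }
  lra.
Qed.

Lemma exp2t_ge : (1 + tau) * (1 + tau) <= exp (2 * tau) /\ 1 + 2 * tau <= exp (2 * tau).
Proof.
  assert (H := exp_ineq1_le tau). assert (H1 := tau_pos).
  replace (2 * tau) with (tau + tau) by ring. rewrite exp_plus. split; [nra|].
  assert (H2 := exp_ineq1_le (tau + tau)). rewrite exp_plus in H2. lra.
Qed.

Lemma expm2t : exp (-2 * tau) = / exp (2 * tau).
Proof. replace (-2 * tau) with (- (2 * tau)) by ring. apply exp_Ropp. Qed.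

Lemma zz_bounds : (2 * tau + tau * tau) / ((1 + tau) * (1 + tau)) <= zz /\ 0 <= zz.
Proof.
  unfold zz. rewrite expm2t. destruct exp2t_ge as [H1 H2]. assert (H3 := tau_pos).
  assert (Hp : 0 < exp (2 * tau)) by apply exp_pos.
  split.
  - replace ((2 * tau + tau * tau) / ((1 + tau) * (1 + tau))) with (1 - / ((1 + tau) * (1 + tau))) by (field; lra).
    assert (/ exp (2 * tau) <= / ((1 + tau) * (1 + tau))); [|lra].
    apply Rinv_le_contravar; nra.
  - assert (/ exp (2 * tau) <= 1); [|lra]. rewrite <- Rinv_1. apply Rinv_le_contravar; lra.
Qed.

Lemma fac_nonneg : 0 <= 1 - (1 + 2 * tau) * exp (-2 * tau).
Proof.
  rewrite expm2t. destruct exp2t_ge as [H1 H2]. assert (H3 := tau_pos).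
  assert (Hp : 0 < exp (2 * tau)) by apply exp_pos.
  assert ((1 + 2 * tau) * / exp (2 * tau) <= 1); [|lra].
  apply Rmult_le_reg_r with (exp (2 * tau)); auto. rewrite Rmult_assoc, Rinv_l by lra. lra.
Qed.

Lemma Zs_K : Zsig sigma K = Zn sigma nK.
Proof. rewrite <- (Zsig_Zn sigma nK sig_pos). unfold nK. rewrite Z2Nat.id; auto. assert (H := K_ge2); lia. Qed.

Lemma Zs_K1 : Zsig sigma (K - 1) = Zn sigma (nK - 1).
Proof.
  rewrite <- (Zsig_Zn sigma (nK - 1) sig_pos). f_equal. unfold nK. assert (H := K_ge2). lia.
Qed.

Lemma WK_eq : WK = Yn sigma nK - (1 + sigma).
Proof.
  unfold WK. rewrite Zs_K, Zs_K1. assert (H := nK_ge2).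
  replace nK with (S (nK - 1)) at 1 by lia. rewrite (Zn_rec sigma sig_pos).
  replace (S (nK - 1)) with nK by lia. ring.
Qed.

Lemma WK_nonneg : 0 <= WK.
Proof. rewrite WK_eq. assert (H := Yn_ge sigma sig_pos nK ltac:(assert (H := nK_ge2); lia)). lra. Qed.

Lemma ZK_ge : Zn sigma nK <= ZK.
Proof.
  unfold ZK. rewrite Zs_K, Zs_K1. assert (H := Zn_nonneg sigma sig_pos (nK - 1)).
  assert (H2 := fac_nonneg). assert (0 <= Zn sigma (nK - 1) * beta * (1 - (1 + 2 * tau) * exp (-2 * tau))); [|lra].
  apply Rmult_le_pos; [apply Rmult_le_pos|]; lra.
Qed.

Lemma Dbar_nonneg : 0 <= Dbar.
Proof.
  unfold Dbar. assert (H1 := Dx_nonneg). assert (H2 := Dv_nonneg). assert (H3 := WK_nonneg).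
  assert (H4 := ZK_ge). assert (H5 := Zn_nonneg sigma sig_pos nK).
  assert (H6 : 0 <= exp (C * tau) / C) by (apply Rlt_le, Rdiv_lt_0_compat; [apply exp_pos|lra]).
  assert (H7 : 0 <= / beta * exp (2 * tau + C * sigma)) by (apply Rmult_le_pos; [apply Rlt_le, Rinv_0_lt_compat; lra|apply Rlt_le, exp_pos]).
  assert (H8 : 0 <= exp (C * tau) * (tau - sigma)) by (apply Rmult_le_pos; [apply Rlt_le, exp_pos|lra]).
  assert (0 <= WK * Dv) by (apply Rmult_le_pos; lra).
  assert (0 <= exp (C * tau) / C * (1 + / beta * exp (2 * tau + C * sigma) + exp (C * tau) * (tau - sigma)) * ZK * Dv); [|lra].
  apply Rmult_le_pos; [|lra]. apply Rmult_le_pos; [|lra]. apply Rmult_le_pos; lra.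
Qed.

Lemma pp_bounds : 0 < pp <= 1.
Proof. unfold pp. split; [apply Hpp|apply Hp1]; apply Dbar_nonneg. Qed.

Lemma tau_small : C + 4 * tau <= 1.
Proof.
  assert (H := Hc2). assert (H1 := pp_bounds). unfold pp in H1. assert (H2 := w_ge1).
  assert (H3 := zz_bounds). assert (H4 := tau_pos).
  assert (0 <= beta * zz) by (apply Rmult_le_pos; lra).
  assert (4 * tau <= w * (4 * tau * w + beta * zz)); [|lra].
  assert (4 * tau <= 4 * tau * w) by nra. nra.
Qed.


Lemma Cx_nonneg : 0 <= C * tau.
Proof. assert (H := tau_pos). apply Rmult_le_pos; lra. Qed.

Lemma Cx_upper : C * tau <= tau * (1 - 4 * tau).
Proof. assert (H := tau_small). assert (H1 := tau_pos). nra. Qed.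

Lemma w_upper : w * (1 - C * tau) <= 1.
Proof.
  unfold w. assert (H := exp_ineq1_le (- (C * tau))).
  assert (Hp := exp_pos (C * tau)).
  assert (Hm : exp (C * tau) * exp (- (C * tau)) = 1) by (rewrite <- exp_plus; replace (C * tau + - (C * tau)) with 0 by ring; apply exp_0).
  nra.
Qed.

Lemma w_upper2 : w * (1 - tau) <= 1.
Proof. assert (H := w_upper). assert (H1 := Cx_upper). assert (H2 := tau_pos). assert (H3 := w_ge1). nra. Qed.

Lemma tw_small : tau * w <= 1 / 3.
Proof. assert (H := w_upper2). assert (H1 := tau_small). assert (H2 := tau_pos). assert (H3 := w_ge1). nra. Qed.

Lemma yy_bounds : 0 <= yy <= tau * w.
Proof. unfold yy. assert (H3 := w_ge1). assert (H := sig_pos). split; nra. Qed.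

Lemma kap_ge1 : 1 <= kap.
Proof.
  unfold kap. assert (H := yy_bounds). assert (H1 := tw_small). assert (H3 := w_ge1).
  apply Rmult_le_reg_r with (1 - yy); [lra|]. unfold Rdiv. rewrite Rmult_assoc, Rinv_l by lra. nra.
Qed.

Lemma kap_eq : kap * (1 - yy) = w.
Proof. unfold kap. assert (H := yy_bounds). assert (H1 := tw_small). field. lra. Qed.

Lemma N1 : 3 * (C * tau) + kap <= 2.
Proof.
  assert (H := kap_eq). assert (H0 := yy_bounds). assert (H1 := tw_small). assert (H2 := w_upper).
  assert (H3 := Cx_upper). assert (H4 := tau_small). assert (H5 := tau_pos). assert (H6 := Cx_nonneg).
  assert (H7 := kap_ge1). assert (H8 := w_ge1).
  assert (Hk : kap * (1 - C * tau - tau) <= 1).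
  { assert (kap * (1 - tau * w) <= w) by nra. nra. }
  assert (Hden : 3 / 4 <= 1 - C * tau - tau) by nra.
  assert (kap <= 4 / 3) by nra. nra.
Qed.

Lemma N2 : 4 * tau * (kap - w) < beta * zz.
Proof.
  destruct zz_bounds as [Hz1 Hz0].
  assert (Hz1' : 2 * tau + tau * tau <= zz * ((1 + tau) * (1 + tau))).
  { assert (H5 := tau_pos). assert (0 < (1 + tau) * (1 + tau)) by nra.
    apply Rmult_le_compat_r with (r := (1 + tau) * (1 + tau)) in Hz1; [|lra].
    unfold Rdiv in Hz1. rewrite Rmult_assoc, Rinv_l in Hz1 by lra. lra. }
  apply (N2core tau w kap yy beta zz tau_pos); auto.
  - assert (H := tau_small). assert (C > 0) by auto. lra.
  - apply w_ge1.
  - apply w_upper2.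
  - apply tw_small.
  - apply yy_bounds.
  - apply kap_eq.
  - apply kap_ge1.
  - unfold zz. lra.
Qed.

Definition qq := C + 4 * tau * kap * w.

Lemma qq_lt : qq < pp.
Proof.
  unfold qq, pp. assert (H := Hc2). assert (H1 := N2). assert (H2 := w_ge1). nra.
Qed.

Definition GG := (1 + 2 * sigma) ^ nK.
Definition BB := GG * Dv.

Lemma T0_eq : T0 = INR nK * sigma.
Proof. unfold T0. rewrite nK_eq. reflexivity. Qed.

Lemma T0_bounds : 2 * tau <= T0 /\ T0 < 3 * tau.
Proof. unfold T0. assert (H := K_min). assert (H1 := sig_pos). split; lra. Qed.

Lemma ALG : T0 * BB + kap * BB / C <= WK * Dv +
   exp (C * tau) / C * (1 + / beta * exp (2 * tau + C * sigma) + exp (C * tau) * (tau - sigma)) * ZK * Dv.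
Proof.
  assert (Hs := sig_pos). assert (Ht := tau_pos). assert (HZ := Zn_lower sigma Hs nK).
  assert (HZ0 := Zn_nonneg sigma Hs nK). assert (HZK := ZK_ge). assert (HW := WK_nonneg).
  assert (HDv0 := Dv_nonneg). assert (Hn := nK_ge2). assert (HN1 := N1). assert (Hk := kap_ge1).
  assert (HT := T0_bounds). rewrite T0_eq in HT. assert (Htau := tau_small).
  assert (Hbern := bernoulli (2 * sigma) nK ltac:(lra)).
  assert (Hn2 : 2 <= INR nK) by (replace 2 with (INR 2) by (simpl; lra); apply le_INR; auto).
  fold GG in Hbern. simpl in HZ. fold GG in HZ.
  assert (Hmain : C * (INR nK * sigma) * GG + kap * GG <= Zn sigma nK).
  { apply (ALGcore sigma tau C (INR nK) GG (Zn sigma nK) kap); auto; lra. }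
  assert (HX : 1 <= 1 + / beta * exp (2 * tau + C * sigma) + exp (C * tau) * (tau - sigma)).
  { assert (0 <= / beta * exp (2 * tau + C * sigma)) by (apply Rmult_le_pos; [apply Rlt_le, Rinv_0_lt_compat; lra|apply Rlt_le, exp_pos]).
    assert (0 <= exp (C * tau) * (tau - sigma)) by (apply Rmult_le_pos; [apply Rlt_le, exp_pos|lra]). lra. }
  fold w in HX |- *. set (X := 1 + / beta * exp (2 * tau + C * sigma) + w * (tau - sigma)) in *.
  assert (Hw := w_ge1).
  assert (HiC : 0 < / C) by (apply Rinv_0_lt_compat; lra).
  assert (H1 : Zn sigma nK / C * Dv <= w / C * X * ZK * Dv).
  { unfold Rdiv. apply Rmult_le_compat_r; auto.
    assert (HZX : Zn sigma nK <= X * ZK).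
    { replace (Zn sigma nK) with (1 * Zn sigma nK) by ring. apply Rmult_le_compat; lra. }
    assert (HZX2 : Zn sigma nK <= w * (X * ZK)).
    { replace (Zn sigma nK) with (1 * Zn sigma nK) by ring. apply Rmult_le_compat; lra. }
    replace (w * / C * X * ZK) with (/ C * (w * (X * ZK))) by ring.
    replace (Zn sigma nK * / C) with (/ C * Zn sigma nK) by ring.
    apply Rmult_le_compat_l; lra. }
  assert (H2 : T0 * BB + kap * BB / C = (C * (INR nK * sigma) * GG + kap * GG) / C * Dv).
  { unfold BB. rewrite T0_eq. field. lra. }
  rewrite H2.
  assert ((C * (INR nK * sigma) * GG + kap * GG) / C * Dv <= Zn sigma nK / C * Dv).
  { apply Rmult_le_compat_r; auto. unfold Rdiv. apply Rmult_le_compat_r; lra. }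
  assert (0 <= WK * Dv) by (apply Rmult_le_pos; lra). lra.
Qed.

Definition vel i t := vel_rhs N d sigma tau psi x v i t.
Definition cc i j t := / (INR N - 1) * psi (eucl d (fun l => x i (t - sigma) l - x j (t - tau) l)).

Lemma vel_eq i t k : vel i t k = sumL (seq 0 N) (fun j => if Nat.eqb j i then 0 else cc i j t * (v j (t - tau) k - v i (t - sigma) k)).
Proof. reflexivity. Qed.

Lemma N1_pos : 1 <= INR N - 1.
Proof. assert (H : 2 <= INR N) by (replace 2 with (INR 2) by (simpl; lra); apply le_INR; auto). lra. Qed.

Lemma cc_bounds i j t : 0 <= cc i j t <= / (INR N - 1).
Proof.
  unfold cc. assert (H := N1_pos). assert (Hi : 0 < / (INR N - 1)) by (apply Rinv_0_lt_compat; lra).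
  assert (He := eucl_ge0 d (fun l => x i (t - sigma) l - x j (t - tau) l)).
  assert (H1 := Hpp _ He). assert (H2 := Hp1 _ He). split; nra.
Qed.

Lemma dot_vel e i t : dot d e (vel i t) =
  sumL (seq 0 N) (fun j => if Nat.eqb j i then 0 else cc i j t * dot d e (fun k => v j (t - tau) k - v i (t - sigma) k)).
Proof.
  unfold dot. rewrite (sumL_ext _ _ (fun k => sumL (seq 0 N) (fun j => e k * (if Nat.eqb j i then 0 else cc i j t * (v j (t - tau) k - v i (t - sigma) k))))).
  - rewrite sumL_swap. apply sumL_ext. intros j _. destruct (Nat.eqb j i).
    + rewrite (sumL_ext _ _ (fun _ => 0)) by (intros; ring). rewrite sumL_const. ring.
    + rewrite <- sumL_scal. apply sumL_ext. intros; ring.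
  - intros k _. rewrite vel_eq. rewrite <- sumL_scal. reflexivity.
Qed.

Lemma V1 i t M : (i < N)%nat -> 0 <= M ->
  (forall j, (j < N)%nat -> j <> i -> eucl d (fun k => v j (t - tau) k - v i (t - sigma) k) <= M) ->
  eucl d (vel i t) <= M.
Proof.
  intros Hi HM H.
  destruct (Req_dec (eucl d (vel i t)) 0) as [H0|Hne]; [lra|].
  assert (Hp : 0 < eucl d (vel i t)) by (assert (H1 := eucl_ge0 d (vel i t)); lra).
  destruct (unit_vec d _ Hp) as [He1 He2]. rewrite <- He2. rewrite dot_vel.
  assert (HN1 := N1_pos).
  apply Rle_trans with (sumL (seq 0 N) (fun j => (/ (INR N - 1) * M) * (if Nat.eqb j i then 0 else 1))).
  - apply sumL_le. intros j Hj. apply in_seq in Hj. destruct (Nat.eqb j i) eqn:Eji; [lra|].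
    assert (Hji : j <> i) by (apply Nat.eqb_neq; auto).
    assert (Hc := cc_bounds i j t).
    assert (Hd := proj_le d (fun k => / eucl d (vel i t) * vel i t k) (fun k => v j (t - tau) k - v i (t - sigma) k) ltac:(lra)).
    assert (Hm := H j ltac:(lia) Hji).
    assert (Hw0 := eucl_ge0 d (fun k => v j (t - tau) k - v i (t - sigma) k)).
    set (D := dot d _ _) in *. set (E := eucl d _) in *.
    apply Rle_trans with (cc i j t * M).
    + apply Rmult_le_compat_l; lra.
    + rewrite Rmult_1_r. apply Rmult_le_compat_r; lra.
  - rewrite sumL_scal, count_ne by auto. right. field. lra.
Qed.

Lemma v_cont_within i k a b u : (i < N)%nat -> (k < d)%nat -> -tau <= a -> a <= u <= b ->
  filterlim (fun s => v i s k) (within (fun s => a <= s <= b) (locally u)) (locally (v i u k)).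
Proof.
  intros Hi Hk Ha Hu. destruct (Hsol i k Hi Hk) as [_ [_ [Hc _]]].
  apply (within_sub _ (fun s => -tau <= s)); [intros; lra|]. apply Hc; lra.
Qed.

Lemma v_cont i k t : (i < N)%nat -> (k < d)%nat -> -tau < t ->
  filterlim (fun s => v i s k) (locally t) (locally (v i t k)).
Proof.
  intros Hi Hk Ht. destruct (Hsol i k Hi Hk) as [_ [_ [Hc _]]].
  apply (within_interior (fun s => -tau <= s) _ _ _ (mkposreal (t + tau) ltac:(lra))).
  - intros s Hs. simpl in Hs. apply Rabs_lt_between in Hs. lra.
  - apply Hc; lra.
Qed.

Lemma v_der i k t : (i < N)%nat -> (k < d)%nat -> 0 < t -> is_derive (fun s => v i s k) t (vel i t k).
Proof. intros Hi Hk Ht. destruct (Hsol i k Hi Hk) as [_ [_ [_ Hd]]]. apply Hd; auto. Qed.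

Lemma v_mvt i a b M : (i < N)%nat -> 0 <= a <= b -> 0 <= M ->
  (forall u, a < u < b -> eucl d (vel i u) <= M) ->
  eucl d (fun k => v i b k - v i a k) <= M * (b - a).
Proof.
  intros Hi Hab HM H.
  apply (vec_mvt d (fun s => v i s) (fun u => vel i u) a b M); try lra; auto.
  - intros k u Hk Hu. apply v_cont_within; auto; lra.
  - intros k u Hk Hu. apply v_der; auto; lra.
Qed.

Lemma v_init l j s1 s2 : (l < N)%nat -> (j < N)%nat -> -tau <= s1 <= 0 -> -tau <= s2 <= 0 ->
  eucl d (fun k => v l s1 k - v j s2 k) <= Dv.
Proof.
  intros Hl Hj H1 H2. destruct HDv as [HD _].
  rewrite (eucl_ext d _ (fun k => v0 l s1 k - v0 j s2 k)); [apply HD; auto|].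
  intros k Hk. destruct (Hsol l k Hl Hk) as [Hl1 _]. destruct (Hsol j k Hj Hk) as [Hj1 _].
  rewrite (proj2 (Hl1 s1 H1)), (proj2 (Hj1 s2 H2)). reflexivity.
Qed.

Definition Dn (n : nat) := (1 + 2 * sigma) ^ n * Dv.

Lemma Dn_nonneg n : 0 <= Dn n.
Proof. unfold Dn. apply Rmult_le_pos; [apply pow_le; assert (H := sig_pos); lra|apply Dv_nonneg]. Qed.

Lemma Tr n : forall l j s1 s2, (l < N)%nat -> (j < N)%nat ->
  -tau <= s1 <= INR n * sigma -> -tau <= s2 <= INR n * sigma ->
  eucl d (fun k => v l s1 k - v j s2 k) <= Dn n.
Proof.
  assert (Hs := sig_pos).
  induction n as [|n IH]; intros l j s1 s2 Hl Hj H1 H2.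
  - simpl in H1, H2. unfold Dn. simpl. rewrite Rmult_1_l. apply v_init; auto; lra.
  - assert (Hn0 : 0 <= INR n) by apply pos_INR.
    rewrite S_INR in H1, H2.
    assert (Hinc : forall j s, (j < N)%nat -> -tau <= s <= (INR n + 1) * sigma ->
       eucl d (fun k => v j s k - v j (Rmin s (INR n * sigma)) k) <= sigma * Dn n).
    { intros j0 s Hj0 Hs0'. assert (HD := Dn_nonneg n).
      destruct (Rle_dec s (INR n * sigma)) as [Hle|Hgt].
      - rewrite Rmin_left by auto. rewrite eucl_zero by (intros; ring). nra.
      - rewrite Rmin_right by lra.
        apply Rle_trans with (Dn n * (s - INR n * sigma)); [|nra].
        apply v_mvt; auto; [split; nra|].
        intros u Hu. apply V1; auto. intros l0 Hl0 _. apply IH; auto; nra. }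
    set (sb1 := Rmin s1 (INR n * sigma)). set (sb2 := Rmin s2 (INR n * sigma)).
    assert (Hsb1 : -tau <= sb1 <= INR n * sigma).
    { unfold sb1. split; [apply Rmin_glb; nra|apply Rmin_r]. }
    assert (Hsb2 : -tau <= sb2 <= INR n * sigma).
    { unfold sb2. split; [apply Rmin_glb; nra|apply Rmin_r]. }
    assert (E1 := Hinc l s1 Hl H1). assert (E2 := Hinc j s2 Hj H2).
    assert (E3 := IH l j sb1 sb2 Hl Hj Hsb1 Hsb2). fold sb1 sb2 in E1, E2.
    rewrite eucl_sym in E2.
    assert (T1 := eucl_tri3 d (v l s1) (v l sb1) (v j s2)).
    assert (T2 := eucl_tri3 d (v l sb1) (v j sb2) (v j s2)).
    unfold Dn in *. simpl pow. nra.
Qed.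

Lemma x_der i k t : (i < N)%nat -> (k < d)%nat -> -tau < t -> t <> 0 -> is_derive (fun s => x i s k) t (v i t k).
Proof.
  intros Hi Hk Ht Ht0. destruct (Hsol i k Hi Hk) as [Heq [_ [_ Hd]]].
  destruct (Rlt_dec 0 t) as [Hp|Hn]; [apply Hd; auto|].
  assert (Htn : t < 0) by lra.
  destruct (Hinit i k Hi Hk) as [_ Hdoi].
  assert (H := doi_interior (-tau) 0 _ _ t ltac:(lra) Hdoi). simpl in H.
  rewrite <- (proj2 (Heq t ltac:(lra))) in H.
  apply (is_derive_ext_loc (fun s => x0 i s k)); auto.
  exists (mkposreal _ (Rmin_stable_in_posreal (mkposreal (t + tau) ltac:(lra)) (mkposreal (- t) ltac:(lra)))).
  intros y Hy. fixball Hy. simpl in Hy.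
  assert (Rmin (t + tau) (- t) <= t + tau) by apply Rmin_l.
  assert (Rmin (t + tau) (- t) <= - t) by apply Rmin_r.
  apply Rabs_lt_between in Hy. symmetry. apply Heq. lra.
Qed.

Lemma x_cont_within i k a b u al : (i < N)%nat -> (k < d)%nat -> -tau <= a - al -> a <= u <= b ->
  filterlim (fun s => x i (s - al) k) (within (fun s => a <= s <= b) (locally u)) (locally (x i (u - al) k)).
Proof.
  intros Hi Hk Ha Hu. destruct (Hsol i k Hi Hk) as [_ [Hc _]].
  apply (within_sub _ (fun s => -tau <= s - al)); [intros; lra|].
  apply (within_shift (fun s => -tau <= s) (fun s => x i s k)). apply Hc. lra.
Qed.

Lemma x_init i j s1 s2 : (i < N)%nat -> (j < N)%nat -> -tau <= s1 <= 0 -> -tau <= s2 <= 0 ->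
  eucl d (fun k => x i s1 k - x j s2 k) <= Dx.
Proof.
  intros Hl Hj H1 H2. destruct HDx as [HD _].
  rewrite (eucl_ext d _ (fun k => x0 i s1 k - x0 j s2 k)); [apply HD; auto|].
  intros k Hk. destruct (Hsol i k Hl Hk) as [Hl1 _]. destruct (Hsol j k Hj Hk) as [Hj1 _].
  rewrite (proj1 (Hl1 s1 H1)), (proj1 (Hj1 s2 H2)). reflexivity.
Qed.

Lemma POS i j al ga r B0 Lc T :
  (i < N)%nat -> (j < N)%nat -> 0 <= al <= tau -> 0 <= ga <= tau -> 0 <= r -> 0 <= B0 -> 0 <= Lc -> tau <= T ->
  (forall u, 0 < u -> u <= T -> u <= r -> eucl d (fun k => v i (u - al) k - v j (u - ga) k) <= B0) ->
  (forall u, T <= u -> u <= r -> eucl d (fun k => v i (u - al) k - v j (u - ga) k) <= Lc * exp (- C * (u - T))) ->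
  eucl d (fun k => x i (r - al) k - x j (r - ga) k) <= Dx + T * B0 + Lc / C.
Proof.
  intros Hi Hj Hal Hga Hr HB0 HLc HT H1 H2.
  assert (HLC : 0 <= Lc / C) by (apply Rmult_le_pos; [auto|apply Rlt_le, Rinv_0_lt_compat; auto]).
  assert (HDx0 := Dx_nonneg).
  set (W := fun k => x i (r - al) k - x j (r - ga) k).
  destruct (Req_dec (eucl d W) 0) as [H0|Hne].
  { fold W. rewrite H0. assert (0 <= T * B0) by (apply Rmult_le_pos; lra). lra. }
  assert (Hp : 0 < eucl d W) by (assert (H := eucl_ge0 d W); lra).
  destruct (unit_vec d W Hp) as [He1 He2].
  set (e := fun k => / eucl d W * W k) in *.
  set (h := fun s => dot d e (fun k => x i (s - al) k - x j (s - ga) k)).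
  set (dh := fun s => dot d e (fun k => v i (s - al) k - v j (s - ga) k)).
  assert (Hhr : h r = eucl d W) by (unfold h; fold W; auto).
  assert (Hh0 : h 0 <= Dx).
  { unfold h. eapply Rle_trans; [apply proj_le; lra|].
    replace (0 - al) with (- al) by ring. replace (0 - ga) with (- ga) by ring.
    apply x_init; auto; lra. }
  assert (Hcont : forall a b u, 0 <= a -> a <= u <= b -> filterlim h (within (fun s => a <= s <= b) (locally u)) (locally (h u))).
  { intros a b u Ha Hu. unfold h. apply flim_dot; [intros; apply flim_const|].
    intros k Hk. apply flim_minus.
    - apply x_cont_within; [exact Hi|exact Hk|lra|lra].
    - apply x_cont_within; [exact Hj|exact Hk|lra|lra]. }
  assert (Hder : forall u, 0 < u -> u <> al -> u <> ga -> is_derive h u (dh u)).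
  { intros u Hu Hua Hug. unfold h, dh. apply is_derive_dot. intros k Hk.
    apply is_derive_Rminus.
    - apply (is_derive_shift (fun s => x i s k)). apply x_der; [exact Hi|exact Hk|lra|intros Habs; apply Hua; lra].
    - apply (is_derive_shift (fun s => x j s k)). apply x_der; [exact Hj|exact Hk|lra|intros Habs; apply Hug; lra]. }
  assert (Hdh : forall u, dh u <= eucl d (fun k => v i (u - al) k - v j (u - ga) k)).
  { intros u. unfold dh. apply proj_le. lra. }
  set (m := Rmin r T).
  assert (Hm : 0 <= m <= T /\ m <= r) by (unfold m; split; [split; [apply Rmin_glb; lra|apply Rmin_r]|apply Rmin_l]).
  assert (HP1 : h m - h 0 <= B0 * (m - 0)).
  { apply (mvt_le2 h dh 0 m al ga B0); try lra.
    - intros u Hu. apply Hcont; lra.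
    - intros u Hu Hua Hug. split; [apply Hder; lra|].
      eapply Rle_trans; [apply Hdh|]. apply H1; lra. }
  assert (HBT : B0 * m <= T * B0) by (rewrite (Rmult_comm T); apply Rmult_le_compat_l; lra).
  destruct (Rle_dec r T) as [HrT|HrT].
  - assert (Hmr : m = r) by (unfold m; apply Rmin_left; auto). rewrite Hmr in HP1, HBT. rewrite <- Hhr. lra.
  - assert (Hmt : m = T) by (unfold m; apply Rmin_right; lra).
    set (Phi := fun s => Lc / C * exp (- C * (s - T))).
    assert (HP2 : (h r + Phi r) - (h T + Phi T) <= 0 * (r - T)).
    { apply (mvt_le (fun s => h s + Phi s) (fun s => dh s + (- C * (Lc / C) * exp (- C * (s - T)))) T r 0); try lra.
      - intros u Hu. apply flim_plus; [apply Hcont; lra|]. unfold Phi. apply flim_expdecay.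
      - intros u Hu. apply is_derive_Rplus; [apply Hder; lra|]. unfold Phi. apply is_derive_expdecay.
      - intros u Hu. assert (Hbb := H2 u ltac:(lra) ltac:(lra)). assert (Hdd := Hdh u).
        replace (- C * (Lc / C) * exp (- C * (u - T))) with (- (Lc * exp (- C * (u - T)))) by (field; lra).
        lra. }
    assert (HPr : 0 <= Phi r) by (unfold Phi; apply Rmult_le_pos; [auto|apply Rlt_le, exp_pos]).
    assert (HPT : Phi T = Lc / C) by (unfold Phi; replace (- C * (T - T)) with 0 by ring; rewrite exp_0; ring).
    rewrite Hmt in HP1. rewrite <- Hhr. lra.
Qed.

Definition a0 := T0 - tau.
Definition FF (eps s : R) := (BB + eps) * exp (- C * (s - T0)).
Definition Pr (eps s : R) :=
  (forall i j, (i < N)%nat -> (j < N)%nat -> eucl d (fun k => v i s k - v j s k) < FF eps s) /\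
  (forall j, (j < N)%nat -> eucl d (vel j s) <= kap * FF eps s).
Definition Dmine (eps : R) := Dx + T0 * BB + kap * (BB + eps) / C.

Lemma BB_nonneg : 0 <= BB.
Proof. unfold BB, GG. apply Rmult_le_pos; [apply pow_le; assert (H := sig_pos); lra|apply Dv_nonneg]. Qed.

Lemma BB_Dn : Dn nK = BB.
Proof. reflexivity. Qed.

Lemma FF_pos eps s : 0 < eps -> 0 < FF eps s.
Proof. intros He. unfold FF. apply Rmult_lt_0_compat; [assert (H := BB_nonneg); lra|apply exp_pos]. Qed.

Lemma FF_shift eps s : FF eps (s - tau) = w * FF eps s.
Proof.
  unfold FF, w. replace (- C * (s - tau - T0)) with (C * tau + - C * (s - T0)) by ring.
  rewrite exp_plus. ring.
Qed.

Lemma FF_decr eps s1 s2 : 0 < eps -> s1 <= s2 -> FF eps s2 <= FF eps s1.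
Proof.
  intros He Hs. unfold FF. apply Rmult_le_compat_l; [assert (H := BB_nonneg); lra|].
  destruct (Req_dec s1 s2) as [->|Hne]; [lra|]. apply Rlt_le, exp_increasing. nra.
Qed.

Lemma FF_early eps s : 0 < eps -> s <= T0 -> BB + eps <= FF eps s.
Proof.
  intros He Hs. unfold FF. assert (H := BB_nonneg).
  assert (1 <= exp (- C * (s - T0))).
  { assert (H1 := exp_ineq1_le (- C * (s - T0))). assert (0 <= - C * (s - T0)) by nra. lra. }
  nra.
Qed.

Lemma a0_pos : tau <= a0.
Proof. unfold a0. destruct T0_bounds. lra. Qed.

Lemma T0_eq2 : T0 = INR nK * sigma.
Proof. exact T0_eq. Qed.

Lemma trans_P eps s : 0 < eps -> a0 <= s <= T0 -> Pr eps s.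
Proof.
  intros He Hs. assert (Ha := a0_pos). assert (Ht := tau_pos). assert (Hsg := sig_pos).
  assert (HF := FF_early eps s He ltac:(lra)). assert (HB := BB_nonneg). assert (Hk := kap_ge1).
  unfold a0 in Hs, Ha. rewrite T0_eq in Hs, Ha.
  split.
  - intros i j Hi Hj. rewrite <- BB_Dn in HF.
    eapply Rle_lt_trans; [apply (Tr nK); auto; lra|lra].
  - intros j Hj. apply Rle_trans with BB.
    2:{ apply Rle_trans with (FF eps s); [lra|]. rewrite <- (Rmult_1_l (FF eps s)) at 1.
        apply Rmult_le_compat_r; [assert (H := FF_pos eps s He); lra|lra]. }
    apply V1; auto. intros l Hl _. rewrite <- BB_Dn. apply Tr; auto; lra.
Qed.

Lemma kap_rel : w * (1 + kap * (tau - sigma)) = kap.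
Proof. assert (H := kap_eq). unfold yy in H. lra. Qed.

Lemma past_X eps s : 0 < eps -> T0 <= s -> (forall u, s - tau <= u <= s - sigma -> Pr eps u) ->
  forall l j, (l < N)%nat -> (j < N)%nat ->
  eucl d (fun k => v l (s - tau) k - v j (s - sigma) k) <= kap * FF eps s.
Proof.
  intros He Hs HP l j Hl Hj. assert (Ha := a0_pos). unfold a0 in Ha. assert (Hsg := sig_pos).
  assert (Hk := kap_ge1). assert (HF := FF_pos eps (s - tau) He).
  assert (E1 : eucl d (fun k => v l (s - tau) k - v j (s - tau) k) <= FF eps (s - tau)).
  { apply Rlt_le. apply (proj1 (HP (s - tau) ltac:(lra))); auto. }
  assert (E2 : eucl d (fun k => v j (s - sigma) k - v j (s - tau) k) <= kap * FF eps (s - tau) * ((s - sigma) - (s - tau))).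
  { apply v_mvt; auto; [lra|nra|]. intros u Hu.
    eapply Rle_trans; [apply (proj2 (HP u ltac:(lra))); auto|].
    apply Rmult_le_compat_l; [lra|]. apply FF_decr; lra. }
  rewrite eucl_sym in E2.
  assert (T := eucl_tri3 d (v l (s - tau)) (v j (s - tau)) (v j (s - sigma))).
  rewrite FF_shift in E1, E2. assert (HR := kap_rel).
  assert (Hk2 : kap * FF eps s = w * FF eps s * (1 + kap * (tau - sigma))).
  { transitivity ((w * (1 + kap * (tau - sigma))) * FF eps s); [rewrite HR; ring|ring]. }
  rewrite Hk2. 
  assert (Hts : (s - sigma) - (s - tau) = tau - sigma) by ring. rewrite Hts in E2.
  lra.
Qed.

Lemma past_V eps s : 0 < eps -> T0 <= s -> (forall u, s - tau <= u <= s - sigma -> Pr eps u) ->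
  forall j, (j < N)%nat -> eucl d (vel j s) <= kap * FF eps s.
Proof.
  intros He Hs HP j Hj. assert (Hk := kap_ge1). assert (HF := FF_pos eps s He).
  apply V1; auto; [nra|]. intros l Hl _. apply past_X; auto.
Qed.

Lemma dist_bound eps t : 0 < eps -> T0 <= t -> (forall u, a0 <= u < t -> Pr eps u) ->
  forall i j, (i < N)%nat -> (j < N)%nat -> eucl d (fun k => x i (t - sigma) k - x j (t - tau) k) <= Dmine eps.
Proof.
  intros He Ht HP i j Hi Hj. assert (Ha := a0_pos). unfold a0 in *. assert (Hsg := sig_pos).
  assert (Hk := kap_ge1). assert (HB := BB_nonneg). assert (HT := T0_bounds).
  unfold Dmine. apply POS; auto; try lra.
  - nra.
  - intros u Hu1 Hu2 Hu3. rewrite <- BB_Dn. rewrite T0_eq in Hu2. apply Tr; auto; rewrite T0_eq in HT; nra.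
  - intros u Hu1 Hu2. rewrite eucl_sym.
    replace (kap * (BB + eps) * exp (- C * (u - T0))) with (kap * FF eps u) by (unfold FF; ring).
    apply past_X; auto. intros u0 Hu0. apply HP. lra.
Qed.

Lemma dist_bound0 eps t : 0 < eps -> 0 <= t -> (forall u, a0 <= u -> Pr eps u) ->
  forall i j, (i < N)%nat -> (j < N)%nat -> eucl d (fun k => x i t k - x j t k) <= Dmine eps.
Proof.
  intros He Ht HP i j Hi Hj. assert (Ha := a0_pos). unfold a0 in *. assert (Hsg := sig_pos).
  assert (Hk := kap_ge1). assert (HB := BB_nonneg). assert (HT := T0_bounds).
  rewrite (eucl_ext d _ (fun k => x i (t - 0) k - x j (t - 0) k)) by (intros; rewrite Rminus_0_r; auto).
  unfold Dmine. apply POS; auto; try lra.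
  - nra.
  - intros u Hu1 Hu2 Hu3. rewrite <- BB_Dn. rewrite T0_eq in Hu2. rewrite !Rminus_0_r.
    apply Tr; auto; rewrite T0_eq in HT; nra.
  - intros u Hu1 Hu2. rewrite !Rminus_0_r.
    replace (kap * (BB + eps) * exp (- C * (u - T0))) with (kap * FF eps u) by (unfold FF; ring).
    assert (HF := FF_pos eps u He).
    apply Rle_trans with (FF eps u); [apply Rlt_le, (proj1 (HP u ltac:(lra))); auto|nra].
Qed.

Lemma dot_sub3 e a b c0 c1 : dot d e (fun k => a k - c1 k) =
  dot d e (fun k => a k - b k) + dot d e (fun k => b k - c0 k) + dot d e (fun k => c0 k - c1 k).
Proof. unfold dot. rewrite <- !sumL_plus. apply sumL_ext. intros; ring. Qed.

Lemma inc_bound eps t j h : 0 < eps -> T0 <= t -> 0 <= h <= tau -> (forall u, a0 <= u < t -> Pr eps u) ->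
  (j < N)%nat -> eucl d (fun k => v j t k - v j (t - h) k) <= kap * FF eps (t - tau) * h.
Proof.
  intros He Ht Hh HP Hj. assert (Ha := a0_pos). unfold a0 in *. assert (Hk := kap_ge1).
  assert (HF := FF_pos eps (t - tau) He).
  apply Rle_trans with (kap * FF eps (t - tau) * (t - (t - h))); [|right; ring].
  apply v_mvt; auto; [lra|apply Rmult_le_pos; lra|]. intros u Hu.
  eapply Rle_trans; [apply (proj2 (HP u ltac:(lra))); auto|].
  apply Rmult_le_compat_l; [lra|]. apply FF_decr; lra.
Qed.

Lemma HAL eps pl t i k0 : 0 < eps -> qq < pl -> (forall s, 0 <= s <= Dmine eps -> pl <= psi s) ->
  T0 <= t -> (forall u, a0 <= u < t -> Pr eps u) ->
  (i < N)%nat -> (k0 < N)%nat ->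
  eucl d (fun k => v i t k - v k0 t k) = FF eps t ->
  (forall a b, (a < N)%nat -> (b < N)%nat -> eucl d (fun k => v a t k - v b t k) <= FF eps t) ->
  False.
Proof.
  intros He Hpl HB Ht HP Hi Hk0 Heq Hall.
  assert (Ha := a0_pos). unfold a0 in *. assert (Hsg := sig_pos). assert (Htau := tau_pos).
  assert (Hkap := kap_ge1). assert (Hw := w_ge1). assert (HNp := N1_pos).
  assert (Hqq := qq_lt). assert (HppB := pp_bounds).
  set (F := FF eps t) in *. assert (HF : 0 < F) by apply FF_pos, He.
  set (W := fun k => v i t k - v k0 t k).
  assert (HWp : 0 < eucl d W) by (unfold W; rewrite Heq; auto).
  destruct (unit_vec d W HWp) as [He1 He2].
  set (e := fun k => / eucl d W * W k) in *.
  set (u := fun j => dot d e (v j t)).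
  assert (Hui : u i - u k0 = F).
  { unfold u. rewrite <- dot_minusr. fold W. rewrite He2. unfold W. auto. }
  assert (Hup : forall j, (j < N)%nat -> u k0 <= u j <= u i).
  { intros j Hj. unfold u in *. split.
    - assert (H1 := proj_le d e (fun k => v i t k - v j t k) ltac:(lra)).
      rewrite dot_minusr in H1. assert (H2 := Hall i j Hi Hj). lra.
    - assert (H1 := proj_le d e (fun k => v j t k - v k0 t k) ltac:(lra)).
      rewrite dot_minusr in H1. assert (H2 := Hall j k0 Hj Hk0). lra. }
  set (S := kap * FF eps (t - tau)).
  assert (HS : S = kap * w * F) by (unfold S, F; rewrite FF_shift; ring).
  assert (HS0 : 0 <= S) by (rewrite HS; apply Rmult_le_pos; [apply Rmult_le_pos|]; lra).
  assert (Err : forall j, (j < N)%nat -> forall h, 0 <= h <= tau -> Rabs (dot d e (fun k => v j t k - v j (t - h) k)) <= S * h).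
  { intros j Hj h Hh. eapply Rle_trans; [apply proj_abs; lra|]. apply inc_bound; auto. }
  assert (Hcc : forall a b, (a < N)%nat -> (b < N)%nat -> pl / (INR N - 1) <= cc a b t).
  { intros a b Ha' Hb'. unfold cc. unfold Rdiv. rewrite Rmult_comm.
    apply Rmult_le_compat_l; [apply Rlt_le, Rinv_0_lt_compat; lra|].
    apply HB. split; [apply eucl_ge0|]. apply dist_bound; auto. }
  assert (Hpl0 : 0 < pl) by (assert (0 <= qq); [unfold qq; assert (0 <= 4 * tau * kap * w) by (apply Rmult_le_pos; [apply Rmult_le_pos|]; lra); lra|lra]).
  set (g := fun s => dot d e (v i s) - dot d e (v k0 s)).
  set (G1 := dot d e (vel i t) - dot d e (vel k0 t)).
  assert (Hg : is_derive g t G1).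
  { unfold g, G1. apply is_derive_Rminus; apply is_derive_dot; intros k Hk; apply v_der; auto; lra. }
  assert (HA : 0 <= G1 + C * F).
  { set (Hf := fun s => g s - FF eps s).
    assert (HD : is_derive Hf t (G1 - (- C * (BB + eps) * exp (- C * (t - T0))))).
    { unfold Hf. apply is_derive_Rminus; auto. unfold FF. apply is_derive_expdecay. }
    replace (G1 + C * F) with (G1 - (- C * (BB + eps) * exp (- C * (t - T0)))) by (unfold F, FF; ring).
    apply (left_deriv Hf t _ (T0 - tau)); auto; [lra| |].
    - unfold Hf, g. rewrite <- dot_minusr. fold W. rewrite He2. unfold W. rewrite Heq. fold F. ring.
    - intros s Hs. unfold Hf, g. rewrite <- dot_minusr.
      assert (H1 := proj_le d e (fun k => v i s k - v k0 s k) ltac:(lra)).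
      assert (H2 := proj1 (HP s ltac:(lra)) i k0 Hi Hk0). lra. }
  assert (HBi : dot d e (vel i t) <= pl / (INR N - 1) * (sumL (seq 0 N) u - INR N * u i) + (tau + sigma) * S).
  { rewrite dot_vel.
    apply Rle_trans with (sumL (seq 0 N) (fun j => pl / (INR N - 1) * (u j - u i) + ((tau + sigma) * S / (INR N - 1)) * (if Nat.eqb j i then 0 else 1))).
    - apply sumL_le. intros j Hj. apply in_seq in Hj.
      destruct (Nat.eqb j i) eqn:Eji.
      + apply Nat.eqb_eq in Eji. subst j. lra.
      + assert (Hc := Hcc i j Hi ltac:(lia)). assert (Hc2 := cc_bounds i j t).
        rewrite (dot_sub3 e (v j (t - tau)) (v j t) (v i t) (v i (t - sigma))).
        assert (E1 := Err j ltac:(lia) tau ltac:(lra)).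
        assert (E2 := Err i Hi sigma ltac:(lra)).
        apply Rabs_le_between in E1. apply Rabs_le_between in E2.
        assert (Hdd1 : dot d e (fun k => v j (t - tau) k - v j t k) = - dot d e (fun k => v j t k - v j (t - tau) k)).
        { rewrite !dot_minusr. ring. }
        assert (Hdd2 : dot d e (fun k => v j t k - v i t k) = u j - u i) by (unfold u; apply dot_minusr).
        rewrite Hdd1, Hdd2.
        assert (Huj := Hup j ltac:(lia)).
        set (A1 := dot d e (fun k => v j t k - v j (t - tau) k)) in *.
        set (A2 := dot d e (fun k => v i t k - v i (t - sigma) k)) in *.
        set (cij := cc i j t) in *.
        assert (Hx1 : cij * (u j - u i) <= pl / (INR N - 1) * (u j - u i)).
        { apply mul_le_neg_r; lra. }
        assert (Hx2 : cij * (- A1 + A2) <= (tau + sigma) * S / (INR N - 1)).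
        { apply Rle_trans with (/ (INR N - 1) * ((tau + sigma) * S)); [|right; field; lra].
          assert (- A1 + A2 <= (tau + sigma) * S) by lra.
          assert (0 <= (tau + sigma) * S) by (apply Rmult_le_pos; lra).
          destruct (Rle_dec 0 (- A1 + A2)).
          - apply Rle_trans with (/ (INR N - 1) * (- A1 + A2)); [apply Rmult_le_compat_r; lra|].
            apply Rmult_le_compat_l; [apply Rlt_le, Rinv_0_lt_compat; lra|lra].
          - apply Rle_trans with 0; [|apply Rmult_le_pos; [apply Rlt_le, Rinv_0_lt_compat; lra|lra]].
            assert (cij * (- A1 + A2) <= 0) by (apply mul_nonneg_nonpos; lra). lra. }
        lra.
    - rewrite sumL_plus, sumL_scal, sumL_scal, count_ne, sumL_minus, sumL_const, length_seq by auto.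
      right. field. lra. }
  assert (HBk : pl / (INR N - 1) * (sumL (seq 0 N) u - INR N * u k0) - (tau + sigma) * S <= dot d e (vel k0 t)).
  { rewrite dot_vel.
    apply Rle_trans with (sumL (seq 0 N) (fun j => pl / (INR N - 1) * (u j - u k0) - ((tau + sigma) * S / (INR N - 1)) * (if Nat.eqb j k0 then 0 else 1))).
    - rewrite sumL_minus, sumL_scal, sumL_scal, count_ne, sumL_minus, sumL_const, length_seq by auto.
      right. field. lra.
    - apply sumL_le. intros j Hj. apply in_seq in Hj.
      destruct (Nat.eqb j k0) eqn:Eji.
      + apply Nat.eqb_eq in Eji. subst j. lra.
      + assert (Hc := Hcc k0 j Hk0 ltac:(lia)). assert (Hc2 := cc_bounds k0 j t).
        rewrite (dot_sub3 e (v j (t - tau)) (v j t) (v k0 t) (v k0 (t - sigma))).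
        assert (E1 := Err j ltac:(lia) tau ltac:(lra)).
        assert (E2 := Err k0 Hk0 sigma ltac:(lra)).
        apply Rabs_le_between in E1. apply Rabs_le_between in E2.
        assert (Hdd1 : dot d e (fun k => v j (t - tau) k - v j t k) = - dot d e (fun k => v j t k - v j (t - tau) k)).
        { rewrite !dot_minusr. ring. }
        assert (Hdd2 : dot d e (fun k => v j t k - v k0 t k) = u j - u k0) by (unfold u; apply dot_minusr).
        rewrite Hdd1, Hdd2.
        assert (Huj := Hup j ltac:(lia)).
        set (A1 := dot d e (fun k => v j t k - v j (t - tau) k)) in *.
        set (A2 := dot d e (fun k => v k0 t k - v k0 (t - sigma) k)) in *.
        set (cij := cc k0 j t) in *.
        assert (Hx1 : pl / (INR N - 1) * (u j - u k0) <= cij * (u j - u k0)).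
        { apply Rmult_le_compat_r; lra. }
        assert (Hx2 : - ((tau + sigma) * S / (INR N - 1)) <= cij * (- A1 + A2)).
        { apply Rle_trans with (- (/ (INR N - 1) * ((tau + sigma) * S))); [right; field; lra|].
          assert (- ((tau + sigma) * S) <= - A1 + A2) by lra.
          assert (0 <= (tau + sigma) * S) by (apply Rmult_le_pos; lra).
          destruct (Rle_dec 0 (- A1 + A2)).
          + apply Rle_trans with 0; [|apply Rmult_le_pos; lra].
            assert (0 <= / (INR N - 1) * ((tau + sigma) * S)) by (apply Rmult_le_pos; [apply Rlt_le, Rinv_0_lt_compat; lra|lra]). lra.
          + assert (cij * (- A1 + A2) >= / (INR N - 1) * (- A1 + A2)) by (apply Rle_ge, mul_le_neg_r; lra).
            assert (/ (INR N - 1) * (- A1 + A2) >= / (INR N - 1) * (- ((tau + sigma) * S))).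
            { apply Rle_ge, Rmult_le_compat_l; [apply Rlt_le, Rinv_0_lt_compat; lra|lra]. }
            lra. }
        lra. }
  assert (HG1 : G1 <= pl / (INR N - 1) * (INR N * (u k0 - u i)) + 2 * (tau + sigma) * S).
  { unfold G1. replace (pl / (INR N - 1) * (INR N * (u k0 - u i))) with
      (pl / (INR N - 1) * (sumL (seq 0 N) u - INR N * u i) - pl / (INR N - 1) * (sumL (seq 0 N) u - INR N * u k0)) by ring.
    lra. }
  rewrite <- Hui in HA. replace (u k0 - u i) with (- F) in HG1 by lra.
  assert (Hfr : pl <= pl / (INR N - 1) * INR N).
  { unfold Rdiv. rewrite Rmult_assoc, Rmult_comm. rewrite <- (Rmult_1_l pl) at 1.
    apply Rmult_le_compat_r; [lra|]. apply Rmult_le_reg_l with (INR N - 1); [lra|].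
    rewrite <- Rmult_assoc, Rinv_r by lra. lra. }
  assert (Hqq2 : C + 2 * (tau + sigma) * kap * w <= qq).
  { unfold qq. assert (0 <= kap * w) by (apply Rmult_le_pos; lra). nra. }
  rewrite HS in HG1. rewrite Hui in HA.
  assert (Hfin : pl * F <= C * F + 2 * (tau + sigma) * kap * w * F).
  { assert (pl / (INR N - 1) * (INR N * - F) = - (pl / (INR N - 1) * INR N) * F) by ring.
    assert (pl * F <= pl / (INR N - 1) * INR N * F) by (apply Rmult_le_compat_r; lra).
    lra. }
  assert (pl * F <= qq * F).
  { assert ((C + 2 * (tau + sigma) * kap * w) * F <= qq * F) by (apply Rmult_le_compat_r; lra). lra. }
  assert (pl <= qq) by (apply Rmult_le_reg_r with F; auto). lra.
Qed.

Lemma pair_cont a b t : (a < N)%nat -> (b < N)%nat -> 0 < t ->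
  filterlim (fun s => eucl d (fun k => v a s k - v b s k) * eucl d (fun k => v a s k - v b s k)) (locally t)
    (locally (eucl d (fun k => v a t k - v b t k) * eucl d (fun k => v a t k - v b t k))).
Proof.
  intros Ha Hb0 Ht. apply (filterlim_ext (fun s => dot d (fun k => v a s k - v b s k) (fun k => v a s k - v b s k))).
  { intros s. rewrite eucl_sq. reflexivity. }
  rewrite eucl_sq. apply flim_dot; intros k Hk; apply flim_minus; apply v_cont; auto; lra.
Qed.

Lemma FF_cont eps t : filterlim (fun s => FF eps s * FF eps s) (locally t) (locally (FF eps t * FF eps t)).
Proof. unfold FF. apply flim_mult; apply flim_expdecay_loc. Qed.

Lemma STEP eps pl : 0 < eps -> qq < pl -> (forall s, 0 <= s <= Dmine eps -> pl <= psi s) ->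
  forall t, a0 <= t -> (forall s, a0 <= s < t -> Pr eps s) ->
  exists del, 0 < del /\ forall s, t <= s < t + del -> Pr eps s.
Proof.
  intros He Hpl HB t Ht HP. assert (Ha := a0_pos). assert (Hsg := sig_pos).
  destruct (Rlt_dec t T0) as [HtT|HtT].
  { exists (T0 - t). split; [lra|]. intros s Hs. apply trans_P; auto; lra. }
  assert (HtT' : T0 <= t) by lra. unfold a0 in *.
  assert (Hv : forall s, t <= s < t + sigma -> forall j, (j < N)%nat -> eucl d (vel j s) <= kap * FF eps s).
  { intros s Hs j Hj. apply past_V; auto; [lra|]. intros u Hu. apply HP. lra. }
  assert (Hle : forall a b, (a < N)%nat -> (b < N)%nat -> eucl d (fun k => v a t k - v b t k) <= FF eps t).
  { intros a b Ha' Hb'. apply sq_le; [apply eucl_ge0|apply FF_pos; auto|].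
    apply (closure_left (fun s => eucl d (fun k => v a s k - v b s k) * eucl d (fun k => v a s k - v b s k)) (fun s => FF eps s * FF eps s) t (t - (T0 - tau))); [lra|apply pair_cont; auto; lra|apply FF_cont|].
    intros s Hs. apply lt_sq; [apply eucl_ge0|]. apply (proj1 (HP s ltac:(lra))); auto. }
  assert (Hlt : forall a b, (a < N)%nat -> (b < N)%nat -> eucl d (fun k => v a t k - v b t k) < FF eps t).
  { intros a b Ha' Hb'. destruct (Rle_lt_or_eq_dec _ _ (Hle a b Ha' Hb')) as [|Heq]; auto.
    exfalso. apply (HAL eps pl t a b); auto. }
  assert (Hext : exists del, 0 < del /\ forall s, t <= s < t + del ->
     forall a, In a (seq 0 N) -> forall b, In b (seq 0 N) -> eucl d (fun k => v a s k - v b s k) < FF eps s).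
  { apply fin_delta. intros a Ha'. apply in_seq in Ha'. apply fin_delta. intros b Hb'. apply in_seq in Hb'.
    destruct (ext_right (fun s => eucl d (fun k => v a s k - v b s k) * eucl d (fun k => v a s k - v b s k))
       (fun s => FF eps s * FF eps s) t) as [del [Hdel Hd]].
    - apply pair_cont; [lia|lia|lra].
    - apply FF_cont.
    - apply lt_sq; [apply eucl_ge0|]. apply Hlt; lia.
    - exists del. split; auto. intros s Hs. apply sq_lt; [apply eucl_ge0|apply FF_pos; auto|]. apply Hd; auto. }
  destruct Hext as [del [Hdel Hd]].
  exists (Rmin del sigma). split; [apply Rmin_pos; lra|].
  assert (Rmin del sigma <= del) by apply Rmin_l. assert (Rmin del sigma <= sigma) by apply Rmin_r.
  intros s Hs. split.
  - intros a b Ha' Hb'. apply (Hd s); [lra|apply in_seq; lia|apply in_seq; lia].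
  - intros j Hj. apply Hv; auto; lra.
Qed.

Lemma Pr_all eps pl : 0 < eps -> qq < pl -> (forall s, 0 <= s <= Dmine eps -> pl <= psi s) ->
  forall s, a0 <= s -> Pr eps s.
Proof. intros He Hpl HB. apply cont_ind. apply (STEP eps pl); auto. Qed.

Lemma is_lim_decay (A c : R) : 0 < c -> is_lim (fun t => A * exp (- c * t)) p_infty 0.
Proof.
  intros Hc.
  assert (H1 : is_lim (fun t => - c * t) p_infty m_infty).
  { assert (H := is_lim_scal_l (fun y => y) (- c) p_infty p_infty (is_lim_id p_infty)).
    simpl in H. unfold Rbar_mult, Rbar_mult' in H.
    destruct (Rle_dec 0 (- c)) as [Hle|Hnle]; [lra|]. exact H. }
  assert (H2 : is_lim (fun t => exp (- c * t)) p_infty 0).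
  { apply (is_lim_comp exp (fun t => - c * t) p_infty 0 m_infty); [apply is_lim_exp_m|exact H1|].
    exists 0. intros y _ Habs. discriminate. }
  assert (H3 := is_lim_scal_l _ A p_infty 0 H2). simpl in H3. rewrite Rmult_0_r in H3. exact H3.
Qed.

Lemma main_result : (exists M, forall t, 0 <= t -> diam N d x t <= M) /\
  is_lim (diam N d v) p_infty 0 /\
  (exists A, 0 < A /\ forall t, 0 <= t -> diam N d v t <= A * exp (- C * t)).
Proof.
  assert (Hq := qq_lt). assert (HppB := pp_bounds). assert (HD0 := Dbar_nonneg).
  set (pl := (pp + qq) / 2).
  assert (Hpl1 : qq < pl) by (unfold pl; lra). assert (Hpl2 : pl < pp) by (unfold pl; lra).
  assert (Hc := Hpc Dbar HD0).
  assert (HP : locally pp (fun y => Rabs (y - pp) < pp - pl)).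
  { exists (mkposreal (pp - pl) ltac:(lra)). intros y Hy. fixball Hy. auto. }
  specialize (Hc _ HP). unfold filtermap, within in Hc. destruct Hc as [eta Heta].
  set (s0 := Dbar + eta / 2).
  assert (Hs0p : pl < psi s0).
  { assert (Hb' : ball Dbar eta s0).
    { apply ballR. unfold s0. replace (Dbar + eta / 2 - Dbar) with (eta / 2) by ring.
      rewrite Rabs_pos_eq; assert (H := cond_pos eta); lra. }
    specialize (Heta s0 Hb' ltac:(unfold s0; assert (H := cond_pos eta); lra)).
    apply Rabs_lt_between in Heta. unfold pp in Heta. lra. }
  assert (Hk := kap_ge1). assert (Heta0 := cond_pos eta).
  set (eps := eta / 2 * C / kap).
  assert (He : 0 < eps) by (unfold eps; apply Rdiv_lt_0_compat; [apply Rmult_lt_0_compat; lra|lra]).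
  assert (HDm : Dmine eps <= s0).
  { assert (HA := ALG). unfold Dmine, s0, Dbar in *.
    assert (Hkeps : kap * (BB + eps) / C = kap * BB / C + eta / 2) by (unfold eps; field; lra).
    rewrite Hkeps. lra. }
  assert (HB : forall s, 0 <= s <= Dmine eps -> pl <= psi s).
  { intros s Hs. apply Rle_trans with (psi s0); [lra|]. apply Hpm; lra. }
  assert (HPr := Pr_all eps pl He Hpl1 HB).
  assert (HBB := BB_nonneg). assert (HT := T0_bounds). assert (Ha := a0_pos). unfold a0 in Ha.
  assert (Hsg := sig_pos).
  set (A := (BB + eps) * exp (C * T0)).
  assert (HA0 : 0 < A) by (unfold A; apply Rmult_lt_0_compat; [lra|apply exp_pos]).
  assert (HFA : forall t, FF eps t = A * exp (- C * t)).
  { intros t. unfold FF, A. rewrite Rmult_assoc, <- exp_plus. f_equal. f_equal. ring. }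
  assert (Hdv : forall t, 0 <= t -> diam N d v t <= A * exp (- C * t)).
  { intros t Ht. rewrite <- HFA. apply diam_le; [apply Rlt_le, FF_pos; auto|].
    intros i j Hi Hj. destruct (Rle_dec t T0) as [HtT|HtT].
    - apply Rle_trans with (BB + eps); [|apply FF_early; auto].
      rewrite <- BB_Dn. apply Rle_trans with (Dn nK); [|lra]. apply Tr; auto; rewrite <- T0_eq; lra.
    - apply Rlt_le. apply (proj1 (HPr t ltac:(unfold a0; lra))); auto. }
  split; [|split].
  - exists (Dmine eps). intros t Ht. apply diam_le.
    + unfold Dmine. assert (0 <= T0 * BB) by (apply Rmult_le_pos; lra).
      assert (0 <= kap * (BB + eps) / C) by (apply Rmult_le_pos; [apply Rmult_le_pos; lra|apply Rlt_le, Rinv_0_lt_compat; lra]).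
      assert (HDx0 := Dx_nonneg). lra.
    + intros i j Hi Hj. apply dist_bound0; auto.
  - apply (is_lim_le_le_loc (fun _ => 0) (fun t => A * exp (- C * t))).
    + exists 0. intros y Hy. split; [apply diam_ge0|apply Hdv; lra].
    + apply is_lim_const.
    + apply is_lim_decay; auto.
  - exists A. split; auto.
Qed.
End Main.

Theorem theorem1p2
  (N d : nat) (sigma tau : R) (psi : R -> R)
  (x0 v0 x v : nat -> R -> nat -> R)
  (K : Z) (beta C Dx Dv : R) :
  (2 <= N)%nat -> (1 <= d)%nat -> 0 <= sigma -> sigma <= tau ->
  (* assumptions on psi *)
  cont_on (fun s => 0 <= s) psi -> noninc_on_nonneg psi ->
  (forall s, 0 <= s -> 0 < psi s) -> (forall s, 0 <= s -> psi s <= 1) ->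
  (* initial data: x0_i in C^1, v0_i in C^0 on [-tau,0], x0_i' = v0_i *)
  (forall i k, (i < N)%nat -> (k < d)%nat ->
     cont_on (fun s => -tau <= s <= 0) (fun s => v0 i s k) /\
     deriv_on_interval (-tau) 0 (fun s => x0 i s k) (fun s => v0 i s k)) ->
  (* (x,v) is a global solution with this initial data *)
  (forall i k, (i < N)%nat -> (k < d)%nat ->
     (forall s, -tau <= s <= 0 -> x i s k = x0 i s k /\ v i s k = v0 i s k) /\
     cont_on (fun s => -tau <= s) (fun s => x i s k) /\
     cont_on (fun s => -tau <= s) (fun s => v i s k) /\
     (forall t, 0 < t ->
        is_derive (fun s => x i s k) t (v i t k) /\
        is_derive (fun s => v i s k) t (vel_rhs N d sigma tau psi x v i t k))) ->
  (* K: smallest integer with K sigma >= 2 tau *)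
  2 * tau <= IZR K * sigma ->
  (forall k : Z, 2 * tau <= IZR k * sigma -> (K <= k)%Z) ->
  (* Delta^0_x, Delta^0_v *)
  is_Delta0 N d tau x0 Dx -> is_Delta0 N d tau v0 Dv ->
  0 < beta -> 4 * tau <= beta * (2 * exp (-2 * tau) - 1) ->
  0 < C ->
  (let ZK := Zsig sigma K + Zsig sigma (K - 1) * beta * (1 - (1 + 2 * tau) * exp (-2 * tau)) in
   let WK := Zsig sigma K - (1 + sigma) * (Zsig sigma (K - 1) + 1) in
   exp (C * tau) * (4 * tau * exp (C * tau) + beta * (1 - exp (-2 * tau))) + C
   <= psi (Dx + WK * Dv
           + exp (C * tau) / C
             * (1 + / beta * exp (2 * tau + C * sigma) + exp (C * tau) * (tau - sigma))
             * ZK * Dv)) ->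
  (exists M, forall t, 0 <= t -> diam N d x t <= M) /\
  is_lim (diam N d v) p_infty 0 /\
  (exists A, 0 < A /\ forall t, 0 <= t -> diam N d v t <= A * exp (- C * t)).
Proof.
  intros. apply (main_result N d sigma tau psi x0 v0 x v K beta C Dx Dv); assumption.
Qed.
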